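(* Let $\kappa\ge3$ be an integer and let $U=\begin{bmatrix} c_{RR} & c_{LR}\\ c_{RL} & c_{LL}\end{bmatrix}\in\mathrm{U}(2)$ satisfy $\overline{c_{LR}}\,\det U=2/\kappa-1$. Consider the Type II quantum walk $Y^\kappa_t$ with coin $U$, initial state $|0,L\rangle$ and reflection phase $\gamma=0$ (Case A) or $\gamma=\pi$ (Case B); this walk describes the distance from the origin of the quantum walk on the $\kappa$-regular tree $\mathbb{T}_\kappa$ started at the root with uniform initial coin state (Case A) or with initial coin state $\kappa^{-1/2}(1,e^{2\pi i/\kappa},\dots,e^{2\pi i(\kappa-1)/\kappa})$ (Case B). Then for every $x\in\{0,1,2,\dots\}$, as $t\to\infty$, $$P(Y_t^\kappa=x)-\frac{1+(-1)^{t+x}}{2}\times\begin{cases}C(\kappa), & x=0,\\ \kappa\, C(\kappa)\left(\frac{1}{\kappa-1}\right)^x, & x>0,\end{cases}\ \longrightarrow 0,$$ where $C(\kappa)=0$ in Case A and $C(\kappa)=\left(\frac{\kappa-2}{\kappa-1}\right)^2$ in Case B.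
   Context: Type II quantum walk: Hilbert space with orthonormal basis $\{|0,L\rangle\}\cup\{|x,R\rangle,|x,L\rangle: x\ge1\}$; unitary evolution $W$ given by $W|0,L\rangle=e^{i\gamma}|1,R\rangle$ and, for $x\ge1$, $W|x,R\rangle=c_{RR}|x+1,R\rangle+c_{LR}|x-1,L\rangle$, $W|x,L\rangle=c_{RL}|x+1,R\rangle+c_{LL}|x-1,L\rangle$ (with $|0,L\rangle$ as $|x-1,L\rangle$ when $x=1$). $P(Y_t^\kappa=x)=\sum_e|\langle e,W^t|0,L\rangle\rangle|^2$, summed over basis vectors $e$ at position $x$ (only $|0,L\rangle$ for $x=0$; $|x,R\rangle,|x,L\rangle$ for $x\ge1$). Equivalently, the parameter $b=\overline{c_{LR}}\det(U)e^{-i\gamma}$ equals $-1+2/\kappa$ in Case A and $1-2/\kappa$ in Case B. *)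

(* Defs.v *)
From Stdlib Require Import Reals.
Open Scope R_scope.

Record Cpx := mkC { Re : R; Im : R }.

Definition C0 : Cpx := mkC 0 0.
Definition C1 : Cpx := mkC 1 0.
Definition Cadd (z w : Cpx) : Cpx := mkC (Re z + Re w) (Im z + Im w).
Definition Csub (z w : Cpx) : Cpx := mkC (Re z - Re w) (Im z - Im w).
Definition Cmul (z w : Cpx) : Cpx :=
  mkC (Re z * Re w - Im z * Im w) (Re z * Im w + Im z * Re w).
Definition Cconj (z : Cpx) : Cpx := mkC (Re z) (- Im z).
Definition Cnorm2 (z : Cpx) : R := Re z * Re z + Im z * Im z.
Definition Cexpi (theta : R) : Cpx := mkC (cos theta) (sin theta).
Definition RtoC (r : R) : Cpx := mkC r 0.

Definition unitary2 (cRR cLR cRL cLL : Cpx) : Prop :=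
  Cadd (Cmul cRR (Cconj cRR)) (Cmul cLR (Cconj cLR)) = C1 /\
  Cadd (Cmul cRR (Cconj cRL)) (Cmul cLR (Cconj cLL)) = C0 /\
  Cadd (Cmul cRL (Cconj cRR)) (Cmul cLL (Cconj cLR)) = C0 /\
  Cadd (Cmul cRL (Cconj cRL)) (Cmul cLL (Cconj cLL)) = C1.

Definition det2 (cRR cLR cRL cLL : Cpx) : Cpx :=
  Csub (Cmul cRR cLL) (Cmul cLR cRL).

(* Amplitudes of W^t |0,L>.  amp t x true = <x,R| W^t |0,L>,
   amp t x false = <x,L| W^t |0,L>.  The coordinate (0,R) does not exist
   and its amplitude is identically 0.  ph = e^{i gamma}. *)
Fixpoint amp (cRR cLR cRL cLL ph : Cpx) (t : nat) (x : nat) (s : bool) : Cpx :=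
  match t with
  | O => match x, s with O, false => C1 | _, _ => C0 end
  | S t' =>
    if s then
      match x with
      | O => C0
      | S O => Cmul ph (amp cRR cLR cRL cLL ph t' O false)
      | S y => Cadd (Cmul cRR (amp cRR cLR cRL cLL ph t' y true))
                    (Cmul cRL (amp cRR cLR cRL cLL ph t' y false))
      end
    else
      Cadd (Cmul cLR (amp cRR cLR cRL cLL ph t' (S x) true))
           (Cmul cLL (amp cRR cLR cRL cLL ph t' (S x) false))
  end.

Definition probY (cRR cLR cRL cLL : Cpx) (gamma : R) (t x : nat) : R :=
  let ph := Cexpi gamma in
  match x with
  | O => Cnorm2 (amp cRR cLR cRL cLL ph t O false)
  | _ => Cnorm2 (amp cRR cLR cRL cLL ph t x true)
         + Cnorm2 (amp cRR cLR cRL cLL ph t x false)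
  end.

Definition limit_profile (kappa : nat) (Ck : R) (t x : nat) : R :=
  (1 + (-1) ^ (t + x)) / 2 *
  match x with
  | O => Ck
  | _ => INR kappa * Ck * (1 / (INR kappa - 1)) ^ x
  end.

Definition C_caseB (kappa : nat) : R :=
  ((INR kappa - 2) / (INR kappa - 1)) ^ 2.

(* Main.v *)
Require Import Defs.
From Stdlib Require Import Reals.
From Stdlib Require Import Lra Lia Psatz Ring Field FunctionalExtensionality.
Require Import Defs.
Open Scope R_scope.


Lemma Cpx_eq : forall z w : Cpx, Re z = Re w -> Im z = Im w -> z = w.
Proof. intros [a b] [c d]; simpl; intros -> ->; reflexivity. Qed.

Definition Copp (z : Cpx) : Cpx := mkC (- Re z) (- Im z).

Ltac cpx := apply Cpx_eq; simpl; try ring.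

Lemma Cring : ring_theory C0 C1 Cadd Cmul Csub Copp (@eq Cpx).
Proof.
  constructor; intros; unfold Cadd, Cmul, Csub, Copp, C0, C1; cpx.
Qed.
Add Ring Cring : Cring.

Lemma RtoC_add a b : RtoC (a + b) = Cadd (RtoC a) (RtoC b).
Proof. cpx. Qed.
Lemma RtoC_mul a b : RtoC (a * b) = Cmul (RtoC a) (RtoC b).
Proof. cpx. Qed.
Lemma RtoC_opp a : RtoC (- a) = Copp (RtoC a).
Proof. cpx. Qed.
Lemma RtoC_sub a b : RtoC (a - b) = Csub (RtoC a) (RtoC b).
Proof. cpx. Qed.
Lemma RtoC_1 : RtoC 1 = C1. Proof. reflexivity. Qed.
Lemma RtoC_0 : RtoC 0 = C0. Proof. reflexivity. Qed.

Lemma Cconj_mul z w : Cconj (Cmul z w) = Cmul (Cconj z) (Cconj w).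
Proof. cpx. Qed.
Lemma Cconj_add z w : Cconj (Cadd z w) = Cadd (Cconj z) (Cconj w).
Proof. cpx. Qed.
Lemma Cconj_sub z w : Cconj (Csub z w) = Csub (Cconj z) (Cconj w).
Proof. cpx. Qed.
Lemma Cconj_RtoC a : Cconj (RtoC a) = RtoC a.
Proof. cpx. Qed.
Lemma Cconj_conj z : Cconj (Cconj z) = z.
Proof. cpx. Qed.
Lemma Cmul_conj z : Cmul z (Cconj z) = RtoC (Cnorm2 z).
Proof. unfold Cnorm2; cpx. Qed.
Lemma Cnorm2_mul z w : Cnorm2 (Cmul z w) = Cnorm2 z * Cnorm2 w.
Proof. unfold Cnorm2; simpl; ring. Qed.
Lemma Cnorm2_nonneg z : 0 <= Cnorm2 z.
Proof. unfold Cnorm2; nra. Qed.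
Lemma Cnorm2_RtoC a : Cnorm2 (RtoC a) = a * a.
Proof. unfold Cnorm2; simpl; ring. Qed.
Lemma Cnorm2_conj z : Cnorm2 (Cconj z) = Cnorm2 z.
Proof. unfold Cnorm2; simpl; ring. Qed.

Definition Cinv (z : Cpx) : Cpx :=
  mkC (Re z / Cnorm2 z) (- Im z / Cnorm2 z).

Lemma Cnorm2_pos z : z <> C0 -> 0 < Cnorm2 z.
Proof.
  intros H. destruct z as [a b]; unfold Cnorm2; simpl.
  destruct (Req_dec a 0); destruct (Req_dec b 0); subst; try nra.
  exfalso; apply H; reflexivity.
Qed.

Lemma Cinv_l z : z <> C0 -> Cmul (Cinv z) z = C1.
Proof.
  intros H. pose proof (Cnorm2_pos z H) as Hp.
  destruct z as [a b]; unfold Cinv, Cnorm2 in *; simpl in *; cpx; field_simplify; try lra;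
  unfold Rdiv; try (rewrite Rinv_r; lra); try nra.
Qed.

Lemma Cinv_r z : z <> C0 -> Cmul z (Cinv z) = C1.
Proof. intros H; transitivity (Cmul (Cinv z) z); [ring | apply Cinv_l; auto]. Qed.

Lemma Cmul_eq0 z w : Cmul z w = C0 -> w <> C0 -> z = C0.
Proof.
  intros H Hw. replace z with (Cmul (Cmul z w) (Cinv w)).
  - rewrite H; ring.
  - transitivity (Cmul z (Cmul w (Cinv w))); [ring|].
    rewrite Cinv_r; auto; ring.
Qed.


Fixpoint csum (f : nat -> Cpx) (n : nat) : Cpx :=
  match n with O => C0 | S n => Cadd (csum f n) (f n) end.

Lemma csum_ext_lt f g n : (forall i, (i < n)%nat -> f i = g i) -> csum f n = csum g n.
Proof.
  induction n; intros H; simpl; auto.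
  rewrite IHn by (intros; apply H; lia). rewrite H by lia. reflexivity.
Qed.

Lemma csum_add f g n : csum (fun i => Cadd (f i) (g i)) n = Cadd (csum f n) (csum g n).
Proof. induction n; simpl. ring. rewrite IHn; ring. Qed.

Lemma csum_sub f g n : csum (fun i => Csub (f i) (g i)) n = Csub (csum f n) (csum g n).
Proof. induction n; simpl. ring. rewrite IHn; ring. Qed.

Lemma csum_scal_l c f n : csum (fun i => Cmul c (f i)) n = Cmul c (csum f n).
Proof. induction n; simpl. ring. rewrite IHn; ring. Qed.

Lemma csum_scal_r c f n : csum (fun i => Cmul (f i) c) n = Cmul (csum f n) c.
Proof. induction n; simpl. ring. rewrite IHn; ring. Qed.

Lemma csum_shift f n : csum f (S n) = Cadd (f O) (csum (fun i => f (S i)) n).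
Proof. induction n. simpl; ring. change (csum f (S (S n))) with (Cadd (csum f (S n)) (f (S n))).
  rewrite IHn; simpl; ring. Qed.

Lemma csum_zero f n : (forall i, (i < n)%nat -> f i = C0) -> csum f n = C0.
Proof. intros H; rewrite (csum_ext_lt f (fun _ => C0)) by auto. clear H. induction n; simpl; auto.
  rewrite IHn; ring. Qed.

Lemma csum_rev f n : csum f (S n) = csum (fun i => f (n - i)%nat) (S n).
Proof.
  revert f; induction n; intros f. simpl. reflexivity.
  rewrite csum_shift. rewrite (IHn (fun i => f (S i))).
  change (csum (fun i => f (S n - i)%nat) (S (S n))) with
    (Cadd (csum (fun i => f (S n - i)%nat) (S n)) (f (S n - S n)%nat)).
  rewrite Nat.sub_diag.
  rewrite (csum_ext_lt (fun i => f (S n - i)%nat) (fun i => f (S (n - i)))).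
  ring. intros i Hi; f_equal; lia.
Qed.

Lemma exchange (G : nat -> nat -> Cpx) N :
  csum (fun k => csum (fun i => G i (k - i)%nat) (S k)) N =
  csum (fun i => csum (fun j => G i j) (N - i)) N.
Proof.
  induction N. reflexivity.
  change (csum (fun k => csum (fun i => G i (k - i)%nat) (S k)) (S N)) with
   (Cadd (csum (fun k => csum (fun i => G i (k - i)%nat) (S k)) N) (csum (fun i => G i (N - i)%nat) (S N))).
  rewrite IHN.
  change (csum (fun i => csum (fun j => G i j) (S N - i)) (S N)) with
   (Cadd (csum (fun i => csum (fun j => G i j) (S N - i)) N) (csum (fun j => G N j) (S N - N))).
  rewrite (csum_ext_lt (fun i => csum (fun j => G i j) (S N - i))
     (fun i => Cadd (csum (fun j => G i j) (N - i)) (G i (N - i)%nat))).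
  2:{ intros i Hi. replace (S N - i)%nat with (S (N - i)) by lia. reflexivity. }
  rewrite csum_add. replace (S N - N)%nat with 1%nat by lia. simpl.
  rewrite Nat.sub_diag. ring.
Qed.

Definition ser := nat -> Cpx.
Definition sadd (a b : ser) : ser := fun n => Cadd (a n) (b n).
Definition sopp (a : ser) : ser := fun n => Copp (a n).
Definition ssub (a b : ser) : ser := fun n => Csub (a n) (b n).
Definition s0 : ser := fun _ => C0.
Definition s1 : ser := fun n => match n with O => C1 | _ => C0 end.
Definition smul (a b : ser) : ser := fun n => csum (fun i => Cmul (a i) (b (n - i)%nat)) (S n).
Definition X : ser := fun n => match n with 1%nat => C1 | _ => C0 end.
Definition cs (c : Cpx) : ser := fun n => match n with O => c | _ => C0 end.

Lemma smul_comm a b : smul a b = smul b a.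
Proof.
  apply functional_extensionality; intros n; unfold smul.
  rewrite csum_rev. apply csum_ext_lt; intros i Hi.
  replace (n - (n - i))%nat with i by lia. ring.
Qed.

Lemma smul_assoc a b c : smul a (smul b c) = smul (smul a b) c.
Proof.
  apply functional_extensionality; intros n; unfold smul.
  rewrite (csum_ext_lt (fun k => Cmul (csum (fun i => Cmul (a i) (b (k - i)%nat)) (S k)) (c (n - k)%nat))
     (fun k => csum (fun i => (fun i j => Cmul (a i) (Cmul (b j) (c (n - i - j)%nat))) i (k - i)%nat) (S k))).
  2:{ intros k Hk. rewrite <- csum_scal_r. apply csum_ext_lt. intros i Hi.
      replace (n - i - (k - i))%nat with (n - k)%nat by lia. ring. }
  rewrite (exchange (fun i j => Cmul (a i) (Cmul (b j) (c (n - i - j)%nat))) (S n)).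
  apply csum_ext_lt. intros i Hi.
  rewrite <- csum_scal_l. replace (S n - i)%nat with (S (n - i)) by lia.
  apply csum_ext_lt; intros j Hj. replace (n - i - j)%nat with (n - i - j)%nat by lia. reflexivity.
Qed.

Lemma smul_distr_l a b c : smul (sadd a b) c = sadd (smul a c) (smul b c).
Proof.
  apply functional_extensionality; intros n; unfold smul, sadd.
  rewrite <- csum_add. apply csum_ext_lt; intros; ring.
Qed.

Lemma smul_1_l a : smul s1 a = a.
Proof.
  apply functional_extensionality; intros n; unfold smul.
  rewrite csum_shift. rewrite csum_zero. simpl. rewrite Nat.sub_0_r; ring.
  intros i Hi; simpl; ring.
Qed.

Lemma Sring : ring_theory s0 s1 sadd smul ssub sopp (@eq ser).
Proof.
  constructor; intros; try (apply functional_extensionality; intros; unfold sadd, ssub, sopp, s0; ring).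
  apply smul_1_l. apply smul_comm. apply smul_assoc. apply smul_distr_l.
Qed.
Add Ring Sring : Sring.

Lemma smul_0 a b : smul a b O = Cmul (a O) (b O).
Proof. unfold smul; simpl; ring. Qed.

Lemma cs_mul_coef c a n : smul (cs c) a n = Cmul c (a n).
Proof.
  unfold smul. rewrite csum_shift, csum_zero. simpl. rewrite Nat.sub_0_r; ring.
  intros; simpl; ring.
Qed.

Lemma X_mul_S a n : smul X a (S n) = a n.
Proof.
  unfold smul. rewrite csum_shift, csum_shift, csum_zero. simpl. rewrite Nat.sub_0_r. ring.
  intros; simpl; ring.
Qed.

Lemma X_mul_0 a : smul X a O = C0.
Proof. unfold smul; simpl; ring. Qed.

Lemma cs_add c d : cs (Cadd c d) = sadd (cs c) (cs d).
Proof. apply functional_extensionality; intros [|n]; unfold sadd; simpl; ring. Qed.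
Lemma cs_mul c d : cs (Cmul c d) = smul (cs c) (cs d).
Proof. apply functional_extensionality; intros n; rewrite cs_mul_coef; destruct n; simpl; ring. Qed.
Lemma cs_sub c d : cs (Csub c d) = ssub (cs c) (cs d).
Proof. apply functional_extensionality; intros [|n]; unfold ssub; simpl; ring. Qed.
Lemma cs_1 : cs C1 = s1.
Proof. apply functional_extensionality; intros [|n]; reflexivity. Qed.
Lemma cs_0 : cs C0 = s0.
Proof. apply functional_extensionality; intros [|n]; reflexivity. Qed.

Lemma ser_cancel a b : smul a b = s0 -> b O <> C0 -> a = s0.
Proof.
  intros H Hb.
  assert (forall n, forall m, (m <= n)%nat -> a m = C0).
  { induction n; intros m Hm.
    - assert (m = O) by lia; subst. pose proof (f_equal (fun f => f O) H) as H0.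
      simpl in H0. rewrite smul_0 in H0. unfold s0 in H0. eapply Cmul_eq0; eauto.
    - destruct (Nat.eq_dec m (S n)); [|apply IHn; lia]. subst.
      pose proof (f_equal (fun f => f (S n)) H) as H0. unfold smul, s0 in H0.
      change (csum (fun i => Cmul (a i) (b (S n - i)%nat)) (S (S n))) with
        (Cadd (csum (fun i => Cmul (a i) (b (S n - i)%nat)) (S n)) (Cmul (a (S n)) (b (S n - S n)%nat))) in H0.
      rewrite csum_zero in H0. rewrite Nat.sub_diag in H0.
      eapply Cmul_eq0; [|eauto]. rewrite <- H0; ring.
      intros i Hi; rewrite IHn by lia; ring. }
  apply functional_extensionality; intros n; apply (H0 n); lia.
Qed.

Lemma X_cancel a : smul X a = s0 -> a = s0.
Proof.
  intros H; apply functional_extensionality; intros n.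
  pose proof (f_equal (fun f => f (S n)) H) as H0; simpl in H0. rewrite X_mul_S in H0. exact H0.
Qed.

Definition divX (a : ser) : ser := fun n => a (S n).
Lemma X_divX a : a O = C0 -> smul X (divX a) = a.
Proof.
  intros H; apply functional_extensionality; intros [|n].
  rewrite X_mul_0; auto. rewrite X_mul_S; reflexivity.
Qed.


Fixpoint Sq (n : nat) : R :=
  match n with O => 1 | S O => 0 | S (S m) => Sq m * (INR m - 1) / (INR m + 2) end.

Definition Sser : ser := fun n => RtoC (Sq n).
Definition Dser (a : ser) : ser := fun n => Cmul (RtoC (INR n)) (a n).

Lemma D_mul a b : Dser (smul a b) = sadd (smul (Dser a) b) (smul a (Dser b)).
Proof.
  apply functional_extensionality; intros n; unfold Dser, sadd, smul.
  rewrite <- csum_scal_l, <- csum_add. apply csum_ext_lt; intros i Hi.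
  replace (INR n) with (INR i + INR (n - i)) by (rewrite <- plus_INR; f_equal; lia).
  rewrite RtoC_add. ring.
Qed.

Lemma XX_coef a n : smul (smul X X) a (S (S n)) = a n.
Proof. rewrite <- smul_assoc, X_mul_S, X_mul_S. reflexivity. Qed.
Lemma XX_coef0 a : smul (smul X X) a O = C0.
Proof. rewrite <- smul_assoc, X_mul_0. reflexivity. Qed.
Lemma XX_coef1 a : smul (smul X X) a 1%nat = C0.
Proof. rewrite <- smul_assoc, X_mul_S, X_mul_0. reflexivity. Qed.

Lemma INR_S2 n : INR (S (S n)) = INR n + 2.
Proof. rewrite !S_INR; ring. Qed.

Lemma DS_eq : Dser Sser = smul (smul X X) (ssub (Dser Sser) Sser).
Proof.
  apply functional_extensionality; intros [|[|n]].
  - rewrite XX_coef0. unfold Dser, Sser; simpl; cpx.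
  - rewrite XX_coef1. unfold Dser, Sser; simpl; cpx.
  - rewrite XX_coef. unfold Dser, Sser, ssub. simpl Sq. rewrite INR_S2.
    pose proof (pos_INR n). cpx. field. lra.
Qed.

Definition Tser := smul Sser Sser.

Lemma DT_eq : Dser Tser = smul (smul X X) (ssub (Dser Tser) (sadd Tser Tser)).
Proof.
  unfold Tser. rewrite D_mul. pose proof DS_eq as H. set (d := Dser Sser) in *.
  transitivity (sadd (smul (smul (smul X X) (ssub d Sser)) Sser) (smul Sser (smul (smul X X) (ssub d Sser)))).
  { rewrite <- H. reflexivity. }
  ring.
Qed.

Definition tgt (n : nat) : R := match n with O => 1 | 2%nat => -1 | _ => 0 end.

Lemma T_coef n : Tser n = RtoC (tgt n).
Proof.
  assert (H : forall n, Tser n = RtoC (tgt n) /\ Tser (S n) = RtoC (tgt (S n))).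
  { induction n0.
    - split; unfold Tser, smul, Sser; simpl; cpx.
    - destruct IHn0 as [H1 H2]; split; auto.
      pose proof (f_equal (fun f => f (S (S n0))) DT_eq) as E. cbv beta in E.
      rewrite XX_coef in E. unfold Dser, ssub, sadd in E. rewrite H1 in E.
      rewrite INR_S2 in E.
      assert (Re (Tser (S (S n0))) * (INR n0 + 2) = (INR n0 - 2) * tgt n0 /\ Im (Tser (S (S n0))) = 0) as [E1 E2].
      { pose proof (f_equal Re E) as Er. pose proof (f_equal Im E) as Ei. cbn [Re Im Cmul Cadd Csub RtoC] in Er, Ei.
        pose proof (pos_INR n0). split; [nra|]. nra. }
      pose proof (pos_INR n0).
      apply Cpx_eq; cbn [Re RtoC]; [|exact E2].
      destruct n0 as [|[|[|m]]]; simpl tgt in *; simpl INR in *; try lra.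
      pose proof (pos_INR m). rewrite ?S_INR in *. nra. }
  apply H.
Qed.

Lemma Tser_eq : Tser = ssub s1 (smul X X).
Proof.
  apply functional_extensionality; intros [|[|[|n]]]; rewrite T_coef; unfold ssub.
  - rewrite (smul_0 X X). simpl; cpx.
  - rewrite X_mul_S. simpl; cpx.
  - rewrite X_mul_S. simpl; cpx.
  - rewrite X_mul_S. simpl; cpx.
Qed.


Fixpoint rsum (f : nat -> R) (n : nat) : R :=
  match n with O => 0 | S n => rsum f n + f n end.

Lemma rsum_ext_lt f g n : (forall i, (i < n)%nat -> f i = g i) -> rsum f n = rsum g n.
Proof. induction n; intros H; simpl; auto. rewrite IHn by (intros; apply H; lia). rewrite H by lia. reflexivity. Qed.
Lemma rsum_le f g n : (forall i, (i < n)%nat -> f i <= g i) -> rsum f n <= rsum g n.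
Proof. induction n; intros H; simpl. lra. pose proof (H n ltac:(lia)). pose proof (IHn ltac:(intros; apply H; lia)). lra. Qed.
Lemma rsum_add f g n : rsum (fun i => f i + g i) n = rsum f n + rsum g n.
Proof. induction n; simpl. ring. rewrite IHn; ring. Qed.
Lemma rsum_scal c f n : rsum (fun i => c * f i) n = c * rsum f n.
Proof. induction n; simpl. ring. rewrite IHn; ring. Qed.
Lemma rsum_nonneg f n : (forall i, 0 <= f i) -> 0 <= rsum f n.
Proof. induction n; intros H; simpl. lra. pose proof (H n). pose proof (IHn H). lra. Qed.
Lemma rsum_mono f m n : (forall i, 0 <= f i) -> (m <= n)%nat -> rsum f m <= rsum f n.
Proof. intros H Hmn. induction Hmn. lra. simpl. pose proof (H m0). lra. Qed.
Lemma rsum_ind f m n : (m <= n)%nat ->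
  rsum (fun i => if (m <=? i)%nat then f i else 0) n = rsum f n - rsum f m.
Proof.
  intros Hmn. induction Hmn.
  - rewrite (rsum_ext_lt _ (fun _ => 0)). 2:{ intros i Hi. destruct (Nat.leb_spec m i); lia || reflexivity. }
    clear. induction m; simpl; [ring|]. rewrite IHm; ring.
  - simpl. rewrite IHHmn. destruct (Nat.leb_spec m m0); [ring|lia].
Qed.

Lemma Re_csum f n : Re (csum f n) = rsum (fun i => Re (f i)) n.
Proof. induction n; simpl; auto. rewrite IHn; reflexivity. Qed.
Lemma Im_csum f n : Im (csum f n) = rsum (fun i => Im (f i)) n.
Proof. induction n; simpl; auto. rewrite IHn; reflexivity. Qed.

Definition N1 (z : Cpx) : R := Rabs (Re z) + Rabs (Im z).
Lemma N1_nonneg z : 0 <= N1 z.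
Proof. unfold N1; pose proof (Rabs_pos (Re z)); pose proof (Rabs_pos (Im z)); lra. Qed.
Lemma N1_add z w : N1 (Cadd z w) <= N1 z + N1 w.
Proof. unfold N1; simpl. pose proof (Rabs_triang (Re z) (Re w)); pose proof (Rabs_triang (Im z) (Im w)); lra. Qed.
Lemma N1_sub z w : N1 (Csub z w) <= N1 z + N1 w.
Proof. unfold N1; simpl. pose proof (Rabs_triang (Re z) (- Re w)); pose proof (Rabs_triang (Im z) (- Im w)).
  rewrite Rabs_Ropp in *. unfold Rminus. lra. Qed.
Lemma N1_mul z w : N1 (Cmul z w) <= N1 z * N1 w.
Proof.
  unfold N1; simpl.
  pose proof (Rabs_triang (Re z * Re w) (- (Im z * Im w))).
  pose proof (Rabs_triang (Re z * Im w) (Im z * Re w)).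
  rewrite Rabs_Ropp, !Rabs_mult in *. unfold Rminus.
  pose proof (Rabs_pos (Re z)); pose proof (Rabs_pos (Im z)); pose proof (Rabs_pos (Re w)); pose proof (Rabs_pos (Im w)).
  nra.
Qed.
Lemma N1_csum f n : N1 (csum f n) <= rsum (fun i => N1 (f i)) n.
Proof. induction n; simpl. unfold N1; simpl; rewrite Rabs_R0; lra. pose proof (N1_add (csum f n) (f n)); lra. Qed.
Lemma N1_Re z : Rabs (Re z) <= N1 z.
Proof. unfold N1; pose proof (Rabs_pos (Im z)); lra. Qed.
Lemma N1_Im z : Rabs (Im z) <= N1 z.
Proof. unfold N1; pose proof (Rabs_pos (Re z)); lra. Qed.
Lemma N1_C0 : N1 C0 = 0.
Proof. unfold N1; simpl; rewrite Rabs_R0; lra. Qed.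

Definition ccv (f : nat -> Cpx) (l : Cpx) : Prop := Un_cv (fun n => N1 (Csub (f n) l)) 0.

Lemma ccv_Re f l : ccv f l -> Un_cv (fun n => Re (f n)) (Re l).
Proof.
  intros H eps Heps. destruct (H eps Heps) as [N HN]. exists N; intros n Hn.
  specialize (HN n Hn). unfold R_dist in *. rewrite Rminus_0_r, Rabs_pos_eq in HN by apply N1_nonneg.
  pose proof (N1_Re (Csub (f n) l)). simpl in H0. lra.
Qed.
Lemma ccv_Im f l : ccv f l -> Un_cv (fun n => Im (f n)) (Im l).
Proof.
  intros H eps Heps. destruct (H eps Heps) as [N HN]. exists N; intros n Hn.
  specialize (HN n Hn). unfold R_dist in *. rewrite Rminus_0_r, Rabs_pos_eq in HN by apply N1_nonneg.
  pose proof (N1_Im (Csub (f n) l)). simpl in H0. lra.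
Qed.
Lemma ccv_of_ReIm f l : Un_cv (fun n => Re (f n)) (Re l) -> Un_cv (fun n => Im (f n)) (Im l) -> ccv f l.
Proof.
  intros H1 H2 eps Heps. destruct (H1 (eps/2) ltac:(lra)) as [N1' HN1]. destruct (H2 (eps/2) ltac:(lra)) as [N2 HN2].
  exists (max N1' N2); intros n Hn. specialize (HN1 n ltac:(lia)). specialize (HN2 n ltac:(lia)).
  unfold R_dist in *. rewrite Rminus_0_r, Rabs_pos_eq by apply N1_nonneg. unfold N1; simpl. lra.
Qed.

Lemma cv0_le (u v : nat -> R) : (forall n, 0 <= u n <= v n) -> Un_cv v 0 -> Un_cv u 0.
Proof.
  intros H Hv eps Heps. destruct (Hv eps Heps) as [N HN]; exists N; intros n Hn.
  specialize (HN n Hn); specialize (H n). unfold R_dist in *. rewrite Rminus_0_r in *.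
  rewrite Rabs_pos_eq in * by lra. lra.
Qed.

Lemma cv0_le_ev (u v : nat -> R) N0 : (forall n, (N0 <= n)%nat -> 0 <= u n <= v n) -> Un_cv v 0 -> Un_cv u 0.
Proof.
  intros H Hv eps Heps. destruct (Hv eps Heps) as [N HN]; exists (max N N0); intros n Hn.
  specialize (HN n ltac:(lia)); specialize (H n ltac:(lia)). unfold R_dist in *. rewrite Rminus_0_r in *.
  rewrite Rabs_pos_eq in * by lra. lra.
Qed.

Lemma ccv_ext f g l : (forall n, f n = g n) -> ccv f l -> ccv g l.
Proof. intros H; unfold ccv. intros Hf. eapply Un_cv_ext; [|exact Hf]. intros n; simpl; rewrite H; reflexivity. Qed.


Lemma cv0_plus u v : Un_cv u 0 -> Un_cv v 0 -> Un_cv (fun n => u n + v n) 0.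
Proof. intros Hu Hv. replace 0 with (0 + 0) by ring. apply CV_plus; auto. Qed.

Lemma cv_const c : Un_cv (fun _ => c) c.
Proof. intros eps Heps; exists O; intros; unfold R_dist; rewrite Rminus_diag, Rabs_R0; lra. Qed.

Lemma cv0_scal c u : Un_cv u 0 -> Un_cv (fun n => c * u n) 0.
Proof. intros Hu. replace 0 with (c * 0) by ring. apply CV_mult; auto. apply cv_const. Qed.

Lemma N1_Csub_sym z w : N1 (Csub z w) = N1 (Csub w z).
Proof. unfold N1; simpl. rewrite (Rabs_minus_sym (Re z)), (Rabs_minus_sym (Im z)). reflexivity. Qed.

Lemma N1_Csub_self z : N1 (Csub z z) = 0.
Proof. unfold N1; simpl. rewrite !Rminus_diag, Rabs_R0. ring. Qed.

Lemma N1_diff_csum b w m n : (forall i, N1 (b i) <= w i) -> (m <= n)%nat ->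
  N1 (Csub (csum b n) (csum b m)) <= rsum w n - rsum w m.
Proof.
  intros Hb Hmn. induction Hmn.
  - rewrite N1_Csub_self. lra.
  - simpl. replace (Csub (Cadd (csum b m0) (b m0)) (csum b m)) with (Cadd (Csub (csum b m0) (csum b m)) (b m0)) by ring.
    pose proof (N1_add (Csub (csum b m0) (csum b m)) (b m0)). pose proof (Hb m0). lra.
Qed.

Lemma abs_le_neg x w : Rabs x <= w -> 0 <= x + w /\ x + w <= 2 * w.
Proof. intros H. pose proof (Rle_abs x). pose proof (Rle_abs (- x)). rewrite Rabs_Ropp in *. lra. Qed.

Lemma real_dom_cv (x w : nat -> R) Wl : (forall i, Rabs (x i) <= w i) -> Un_cv (rsum w) Wl ->
  exists l, Un_cv (rsum x) l.
Proof.
  intros Hx Hw.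
  assert (Hw0 : forall i, 0 <= w i) by (intros i; pose proof (Rabs_pos (x i)); pose proof (Hx i); lra).
  assert (Hgr : Un_growing (rsum w)) by (intros n; simpl; pose proof (Hw0 n); lra).
  pose proof (growing_ineq _ _ Hgr Hw) as Hle.
  assert (Hg : Un_growing (rsum (fun i => x i + w i))).
  { intros n; simpl. pose proof (abs_le_neg _ _ (Hx n)). lra. }
  assert (Hb : has_ub (rsum (fun i => x i + w i))).
  { exists (2 * Wl). intros y [n ->]. rewrite <- (Rmult_1_l (rsum _ _)).
    apply Rle_trans with (rsum (fun i => 2 * w i) n).
    - rewrite Rmult_1_l. apply rsum_le; intros i _. pose proof (abs_le_neg _ _ (Hx i)); lra.
    - rewrite rsum_scal. pose proof (Hle n). lra. }
  destruct (growing_cv _ Hg Hb) as [l Hl].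
  exists (l - Wl). eapply Un_cv_ext; [|apply (CV_minus _ _ _ _ Hl Hw)].
  intros n; simpl. rewrite rsum_add. ring.
Qed.

Lemma dominated_cv (a : nat -> Cpx) (w : nat -> R) Wl :
  (forall i, N1 (a i) <= w i) -> Un_cv (rsum w) Wl -> exists A, ccv (csum a) A.
Proof.
  intros Ha Hw.
  destruct (real_dom_cv (fun i => Re (a i)) w Wl) as [lr Hr]; auto.
  { intros i; pose proof (N1_Re (a i)); pose proof (Ha i); lra. }
  destruct (real_dom_cv (fun i => Im (a i)) w Wl) as [li Hi]; auto.
  { intros i; pose proof (N1_Im (a i)); pose proof (Ha i); lra. }
  exists (mkC lr li). apply ccv_of_ReIm; simpl.
  - eapply Un_cv_ext; [|exact Hr]. intros n; simpl; rewrite Re_csum; reflexivity.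
  - eapply Un_cv_ext; [|exact Hi]. intros n; simpl; rewrite Im_csum; reflexivity.
Qed.

Lemma csum_smul_exchange a b n :
  csum (smul a b) n = csum (fun i => Cmul (a i) (csum b (n - i))) n.
Proof.
  unfold smul. rewrite (exchange (fun i j => Cmul (a i) (b j)) n).
  apply csum_ext_lt; intros i Hi. rewrite csum_scal_l. reflexivity.
Qed.

Lemma mertens (a b : nat -> Cpx) (w : nat -> R) Wl A B :
  (forall i, N1 (a i) <= w i) -> (forall i, N1 (b i) <= w i) -> Un_cv (rsum w) Wl ->
  ccv (csum a) A -> ccv (csum b) B -> ccv (csum (smul a b)) (Cmul A B).
Proof.
  intros Ha Hb Hw HA HB.
  assert (Hw0 : forall i, 0 <= w i) by (intros i; pose proof (N1_nonneg (a i)); pose proof (Ha i); lra).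
  assert (Hgr : Un_growing (rsum w)) by (intros n; simpl; pose proof (Hw0 n); lra).
  pose proof (growing_ineq _ _ Hgr Hw) as Hle.
  assert (Hmono : forall m n, (m <= n)%nat -> rsum w m <= rsum w n) by (intros; apply rsum_mono; auto).
  assert (HWl : 0 <= Wl) by (pose proof (Hle O); simpl in *; lra).
  set (Wp := rsum w) in *.
  set (E := fun n => rsum (fun i => w i * (Wp n - Wp (n - i)%nat)) n).
  assert (Herr : forall n, N1 (Csub (Cmul (csum a n) (csum b n)) (csum (smul a b) n)) <= E n).
  { intros n. rewrite csum_smul_exchange, <- csum_scal_r, <- csum_sub.
    eapply Rle_trans; [apply N1_csum|]. apply rsum_le; intros i Hi.
    replace (Csub (Cmul (a i) (csum b n)) (Cmul (a i) (csum b (n - i)))) with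
      (Cmul (a i) (Csub (csum b n) (csum b (n - i)))) by ring.
    eapply Rle_trans; [apply N1_mul|]. apply Rmult_le_compat; auto using N1_nonneg.
    apply N1_diff_csum; auto. lia. }
  assert (HE : Un_cv E 0).
  { intros eps Heps.
    set (eta := eps / (2 * (Wl + 1))).
    assert (Heta : 0 < eta) by (unfold eta; apply Rdiv_lt_0_compat; lra).
    destruct (Hw eta Heta) as [N0 HN0].
    exists (2 * N0)%nat. intros n Hn. unfold R_dist. rewrite Rminus_0_r.
    assert (Hnn : forall k, (k <= n)%nat -> 0 <= Wp n - Wp k) by (intros k Hk; pose proof (Hmono k n Hk); lra).
    assert (E0 : 0 <= E n).
    { unfold E. apply Rle_trans with (rsum (fun _ => 0) n).
      - clear. induction n; simpl; lra.
      - apply rsum_le; intros i Hi. apply Rmult_le_pos; auto. apply Hnn; lia. }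
    assert (E1 : E n <= rsum (fun i => (Wp n - Wp (n - N0)%nat) * w i + Wl * (if (N0 <=? i)%nat then w i else 0)) n).
    { unfold E. apply rsum_le; intros i Hi. pose proof (Hw0 i).
      destruct (Nat.leb_spec N0 i).
      - pose proof (Hle n). assert (0 <= Wp (n - i)%nat) by (unfold Wp; apply rsum_nonneg; auto).
        pose proof (Hnn (n - N0)%nat ltac:(lia)). nra.
      - pose proof (Hmono (n - N0)%nat (n - i)%nat ltac:(lia)). nra. }
    rewrite rsum_add, rsum_scal, rsum_scal, rsum_ind in E1 by lia.
    pose proof (HN0 (n - N0)%nat ltac:(lia)) as H1. pose proof (HN0 N0 ltac:(lia)) as H2.
    unfold R_dist in H1, H2. pose proof (Hle (n - N0)%nat). pose proof (Hle N0). pose proof (Hle n).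
    rewrite Rabs_left1 in H1 by lra. rewrite Rabs_left1 in H2 by lra.
    assert (Hp: 0 <= Wp n) by (unfold Wp; apply rsum_nonneg; auto).
    rewrite Rabs_pos_eq by lra.
    fold Wp in E1.
    assert (Wp n - Wp (n - N0)%nat <= eta) by lra. assert (Wp n - Wp N0 <= eta) by lra.
    assert (0 <= Wp n - Wp (n - N0)%nat) by (apply Hnn; lia).
    assert (E n <= Wl * eta + Wl * eta) by nra.
    assert (Wl * eta + Wl * eta < eps).
    { replace (Wl * eta + Wl * eta) with (eps * (Wl / (Wl + 1))) by (unfold eta; field; lra).
      assert (Hq : Wl / (Wl + 1) * (Wl + 1) = Wl) by (field; lra).
      assert (Wl / (Wl + 1) < 1) by nra. nra. }
    lra. }
  assert (HAB : Un_cv (fun n => N1 (Csub (Cmul (csum a n) (csum b n)) (Cmul A B))) 0).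
  { apply cv0_le with (fun n => Wl * N1 (Csub (csum b n) B) + N1 B * N1 (Csub (csum a n) A)).
    - intros n. split; [apply N1_nonneg|].
      replace (Csub (Cmul (csum a n) (csum b n)) (Cmul A B)) with
        (Cadd (Cmul (csum a n) (Csub (csum b n) B)) (Cmul (Csub (csum a n) A) B)) by ring.
      eapply Rle_trans; [apply N1_add|].
      pose proof (N1_mul (csum a n) (Csub (csum b n) B)). pose proof (N1_mul (Csub (csum a n) A) B).
      assert (N1 (csum a n) <= Wl).
      { eapply Rle_trans; [apply N1_csum|]. eapply Rle_trans; [|apply (Hle n)]. apply rsum_le; intros; auto. }
      pose proof (N1_nonneg (Csub (csum b n) B)). pose proof (N1_nonneg B). nra.
    - apply cv0_plus; apply cv0_scal; assumption. }
  unfold ccv. apply cv0_le with (fun n => E n + N1 (Csub (Cmul (csum a n) (csum b n)) (Cmul A B))).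
  - intros n; split; [apply N1_nonneg|].
    replace (Csub (csum (smul a b) n) (Cmul A B)) with
      (Cadd (Csub (csum (smul a b) n) (Cmul (csum a n) (csum b n))) (Csub (Cmul (csum a n) (csum b n)) (Cmul A B))) by ring.
    eapply Rle_trans; [apply N1_add|]. rewrite N1_Csub_sym. pose proof (Herr n). lra.
  - apply cv0_plus; auto.
Qed.


Lemma Sq_SS n : Sq (S (S n)) = Sq n * (INR n - 1) / (INR n + 2).
Proof. reflexivity. Qed.

Lemma Sq_odd k : Sq (S (2 * k)) = 0.
Proof. induction k. reflexivity. replace (S (2 * S k)) with (S (S (S (2 * k)))) by lia.
  rewrite Sq_SS, IHk. unfold Rdiv; ring. Qed.

Lemma Sq_nonpos n : (1 <= n)%nat -> Sq n <= 0.
Proof.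
  assert (H : forall n, Sq (S n) <= 0 /\ Sq (S (S n)) <= 0).
  { induction n0.
    - simpl. split; [lra|]. replace (1 * (0 - 1) / (0 + 2)) with (-1/2) by field. lra.
    - destruct IHn0 as [H1 H2]. split; auto. rewrite Sq_SS.
      rewrite S_INR. pose proof (pos_INR n0).
      apply Rmult_le_reg_r with (INR n0 + 1 + 2); [lra|]. field_simplify; [|lra]. nra. }
  intros Hn. destruct n. lia. apply H.
Qed.

Lemma rsum_Sq_even k : rsum Sq (S (2 * k)) = - (INR (2 * k) + 2) * Sq (S (S (2 * k))).
Proof.
  induction k.
  - simpl. field.
  - replace (S (2 * S k)) with (S (S (S (2 * k)))) by lia.
    change (rsum Sq (S (S (S (2 * k))))) with (rsum Sq (S (2 * k)) + Sq (S (2 * k)) + Sq (S (S (2 * k)))).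
    rewrite IHk, Sq_odd. replace (S (S (S (S (2 * k))))) with (S (S (S (S (2 * k))))) by lia.
    rewrite (Sq_SS (S (S (2 * k)))). rewrite !S_INR. replace (INR (2 * S k)) with (INR (2 * k) + 2).
    2:{ replace (2 * S k)%nat with (S (S (2 * k))) by lia. rewrite !S_INR; ring. }
    pose proof (pos_INR (2 * k)). field. lra.
Qed.

Lemma rsum_Sq_nonneg n : 0 <= rsum Sq n.
Proof.
  destruct (Nat.Even_or_Odd n) as [[k ->]|[k ->]].
  - destruct k. simpl; lra.
    replace (2 * S k)%nat with (S (S (2 * k))) by lia.
    change (rsum Sq (S (S (2 * k)))) with (rsum Sq (S (2 * k)) + Sq (S (2 * k))).
    rewrite Sq_odd, rsum_Sq_even. pose proof (Sq_nonpos (S (S (2 * k))) ltac:(lia)). pose proof (pos_INR (2 * k)). nra.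
  - replace (2 * k + 1)%nat with (S (2 * k)) by lia. rewrite rsum_Sq_even.
    pose proof (Sq_nonpos (S (S (2 * k))) ltac:(lia)). pose proof (pos_INR (2 * k)). nra.
Qed.

Lemma rsum_abs_Sq n : (1 <= n)%nat -> rsum (fun i => Rabs (Sq i)) n + rsum Sq n = 2.
Proof.
  intros Hn. induction Hn.
  - simpl. rewrite Rabs_R1. ring.
  - simpl. pose proof (Sq_nonpos m ltac:(lia)). rewrite Rabs_left1 by lra. lra.
Qed.

Lemma abs_Sq_cv : exists Wl, Un_cv (rsum (fun i => Rabs (Sq i))) Wl.
Proof.
  assert (Hg : Un_growing (rsum (fun i => Rabs (Sq i)))) by (intros n; simpl; pose proof (Rabs_pos (Sq n)); lra).
  assert (Hb : has_ub (rsum (fun i => Rabs (Sq i)))).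
  { exists 2. intros y [n ->]. destruct n. simpl; lra.
    pose proof (rsum_abs_Sq (S n) ltac:(lia)). pose proof (rsum_Sq_nonneg (S n)). lra. }
  destruct (growing_cv _ Hg Hb) as [l Hl]. exists l; auto.
Qed.

Fixpoint Cpow (z : Cpx) (n : nat) : Cpx := match n with O => C1 | S n => Cmul z (Cpow z n) end.
Lemma Cpow_add z m n : Cpow z (m + n) = Cmul (Cpow z m) (Cpow z n).
Proof. induction m; simpl. ring. rewrite IHm; ring. Qed.
Lemma Cpow_mul z w n : Cpow (Cmul z w) n = Cmul (Cpow z n) (Cpow w n).
Proof. induction n; simpl. ring. rewrite IHn; ring. Qed.
Lemma Cnorm2_pow z n : Cnorm2 (Cpow z n) = Cnorm2 z ^ n.
Proof. induction n; simpl. unfold Cnorm2; simpl; ring. rewrite Cnorm2_mul, IHn; ring. Qed.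
Lemma Cconj_pow z n : Cconj (Cpow z n) = Cpow (Cconj z) n.
Proof. induction n; simpl. cpx. rewrite Cconj_mul, IHn; reflexivity. Qed.

Definition scale (d : Cpx) (a : ser) : ser := fun n => Cmul (Cpow d n) (a n).
Lemma scale_mul d a b : smul (scale d a) (scale d b) = scale d (smul a b).
Proof.
  apply functional_extensionality; intros n; unfold scale, smul.
  rewrite <- csum_scal_l. apply csum_ext_lt; intros i Hi.
  replace (Cpow d n) with (Cmul (Cpow d i) (Cpow d (n - i))) by (rewrite <- Cpow_add; f_equal; lia). ring.
Qed.
Lemma scale_scale d e a : scale d (scale e a) = scale (Cmul d e) a.
Proof. apply functional_extensionality; intros n; unfold scale; rewrite Cpow_mul; ring. Qed.

Definition aser (g : Cpx) : ser := scale g Sser.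

Lemma aser_sq g : smul (aser g) (aser g) = ssub s1 (smul (cs (Cmul g g)) (smul X X)).
Proof.
  unfold aser. rewrite scale_mul. fold Tser. rewrite Tser_eq.
  apply functional_extensionality; intros [|[|[|n]]]; unfold scale, ssub; rewrite ?cs_mul_coef.
  all: rewrite ?X_mul_S, ?X_mul_0, ?smul_0; simpl; cpx.
Qed.

Lemma Re_le1 z : Cnorm2 z = 1 -> Rabs (Re z) <= 1.
Proof. unfold Cnorm2; intros H. apply Rabs_le. nra. Qed.
Lemma Im_le1 z : Cnorm2 z = 1 -> Rabs (Im z) <= 1.
Proof. unfold Cnorm2; intros H. apply Rabs_le. nra. Qed.

Lemma N1_aser g i : Cnorm2 g = 1 -> N1 (aser g i) <= 2 * Rabs (Sq i).
Proof.
  intros Hg. unfold aser, scale, Sser, N1. assert (Hp : Cnorm2 (Cpow g i) = 1) by (rewrite Cnorm2_pow, Hg; apply pow1).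
  pose proof (Re_le1 _ Hp). pose proof (Im_le1 _ Hp). cbn [Re Im Cmul RtoC]. rewrite !Rmult_0_r, Rminus_0_r, ?Rplus_0_r, ?Rplus_0_l, !Rabs_mult.
  pose proof (Rabs_pos (Sq i)). nra.
Qed.


Definition epsC (b : R) : Cpx := mkC (sqrt (1 - b * b)) (- b).

Lemma sqrt_sq1 b : -1 < b < 1 -> sqrt (1 - b * b) * sqrt (1 - b * b) = 1 - b * b.
Proof. intros H; apply sqrt_sqrt; nra. Qed.

Lemma epsC_norm b : -1 < b < 1 -> Cnorm2 (epsC b) = 1.
Proof. intros H; unfold Cnorm2, epsC; simpl. rewrite sqrt_sq1 by auto. ring. Qed.

Lemma csum_conj f n : csum (fun i => Cconj (f i)) n = Cconj (csum f n).
Proof. induction n; simpl. cpx. rewrite IHn, Cconj_add. reflexivity. Qed.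

Lemma N1_conj z : N1 (Cconj z) = N1 z.
Proof. unfold N1; simpl; rewrite Rabs_Ropp; reflexivity. Qed.

Lemma ccv_conj f l : ccv f l -> ccv (fun n => Cconj (f n)) (Cconj l).
Proof. unfold ccv; intros H. eapply Un_cv_ext; [|exact H]. intros n; simpl.
  rewrite <- Cconj_sub, N1_conj. reflexivity. Qed.

Lemma ccv_unique f l1 l2 : ccv f l1 -> ccv f l2 -> l1 = l2.
Proof.
  intros H1 H2. apply Cpx_eq.
  - eapply UL_sequence; apply ccv_Re; eauto.
  - eapply UL_sequence; apply ccv_Im; eauto.
Qed.

Lemma ccv_eventually f l N : (forall n, (N <= n)%nat -> f n = l) -> ccv f l.
Proof.
  intros H eps Heps. exists N; intros n Hn. rewrite H by lia. unfold R_dist. rewrite N1_Csub_self.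
  rewrite Rminus_0_r, Rabs_R0. lra.
Qed.

Lemma aser_conj g i : aser (Cconj g) i = Cconj (aser g i).
Proof. unfold aser, scale, Sser. rewrite Cconj_mul, Cconj_pow, Cconj_RtoC. reflexivity. Qed.

Lemma Lim_sum b : -1 < b < 0 ->
  ccv (csum (smul (aser (epsC b)) (aser (Cconj (epsC b))))) (RtoC (- 2 * b)).
Proof.
  intros Hb. set (e := epsC b). assert (He : Cnorm2 e = 1) by (apply epsC_norm; lra).
  assert (Hec : Cnorm2 (Cconj e) = 1) by (rewrite Cnorm2_conj; auto).
  destruct abs_Sq_cv as [Wl HWl].
  assert (HW2 : Un_cv (rsum (fun i => 2 * Rabs (Sq i))) (2 * Wl)).
  { eapply Un_cv_ext; [|apply (CV_mult _ _ _ _ (cv_const 2) HWl)]. intros n; simpl; rewrite rsum_scal; reflexivity. }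
  destruct (dominated_cv (aser e) _ _ (fun i => N1_aser e i He) HW2) as [R HR].
  assert (HRc : ccv (csum (aser (Cconj e))) (Cconj R)).
  { apply ccv_conj in HR. eapply ccv_ext; [|exact HR]. intros n; simpl.
    rewrite <- csum_conj. apply csum_ext_lt; intros; rewrite aser_conj; reflexivity. }
  pose proof (mertens _ _ _ _ _ _ (fun i => N1_aser e i He) (fun i => N1_aser e i He) HW2 HR HR) as H1.
  pose proof (mertens _ _ _ _ _ _ (fun i => N1_aser e i He) (fun i => N1_aser (Cconj e) i Hec) HW2 HR HRc) as H2.
  assert (HRR : Cmul R R = Csub C1 (Cmul e e)).
  { eapply ccv_unique; [exact H1|]. rewrite aser_sq. apply ccv_eventually with 3%nat.
    intros n Hn. destruct n as [|[|[|n]]]; try lia.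
    rewrite !csum_shift. rewrite csum_zero.
    - unfold ssub; rewrite !cs_mul_coef, !X_mul_S, ?smul_0. simpl. cpx.
    - intros i Hi. unfold ssub; rewrite cs_mul_coef, !X_mul_S. simpl. cpx. }
  assert (HN : Cnorm2 R * Cnorm2 R = 4 * b * b).
  { rewrite <- Cnorm2_mul, HRR. unfold e, epsC, Cnorm2; simpl.
    replace (sqrt (1 - b * b) * sqrt (1 - b * b)) with (1 - b * b) by (rewrite sqrt_sq1; lra).
    pose proof (sqrt_sq1 b ltac:(lra)). nra. }
  assert (HN2 : Cnorm2 R = - 2 * b) by (pose proof (Cnorm2_nonneg R); nra).
  replace (RtoC (- 2 * b)) with (Cmul R (Cconj R)) by (rewrite Cmul_conj, HN2; reflexivity).
  exact H2.
Qed.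


Record Hyps (cRR cLR cRL cLL ph d : Cpx) (b : R) : Prop := {
  hb : -1 < b < 0;
  hph : ph = RtoC 1 \/ ph = RtoC (-1);
  hd : Cnorm2 d = 1;
  hLR : cLR = Cmul (RtoC b) (Cmul d d);
  hRL : cRL = RtoC (- b);
  hRRLL : Cmul cRR cLL = Cmul (Cmul d d) (Csub C1 (Cmul (RtoC b) (RtoC b)));
  hnRR : Cnorm2 cRR = 1 - b * b;
  hnLL : Cnorm2 cLL = 1 - b * b }.

Definition XX := smul X X.
Definition useries (d : Cpx) := smul (cs (Cmul d d)) XX.
Definition Shat (d : Cpx) (b : R) : ser :=
  smul (aser (Cmul d (epsC b))) (aser (Cmul d (Cconj (epsC b)))).
Definition Vser d b := ssub (sadd s1 (useries d)) (Shat d b).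
Definition rho cLL d b := smul (cs (Cinv (Cmul (RtoC 2) cLL))) (divX (Vser d b)).
Fixpoint geo (D : Cpx) (n : nat) : Cpx :=
  match n with O => C1 | S O => C0 | S (S m) => Cmul D (geo D m) end.
Definition Nser ph d b := sadd (sadd (cs (RtoC (2 * b))) (smul (cs ph) (ssub s1 (useries d))))
                              (smul (cs ph) (Shat d b)).
Definition L0 ph d b := smul (cs (Cinv (Cmul (RtoC 2) (Cadd ph (RtoC b))))) (smul (Nser ph d b) (geo (Cmul d d))).
Definition Pss ph d b := ssub (L0 ph d b) s1.

Lemma cs_two : cs (RtoC 2) = sadd s1 s1.
Proof. apply functional_extensionality; intros [|n]; unfold sadd; simpl; cpx. Qed.

Lemma ph_sq ph : ph = RtoC 1 \/ ph = RtoC (-1) -> Cmul ph ph = C1.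
Proof. intros [-> | ->]; cpx. Qed.

Lemma ph_b_nz ph b : ph = RtoC 1 \/ ph = RtoC (-1) -> -1 < b < 0 -> Cadd ph (RtoC b) <> C0.
Proof. intros [-> | ->] Hb E; apply (f_equal Re) in E; simpl in E; lra. Qed.

Lemma Cnz_2 z : z <> C0 -> Cmul (RtoC 2) z <> C0.
Proof. intros H E. apply H. apply (f_equal (Cmul (RtoC (1/2)))) in E.
  replace z with (Cmul (RtoC (1/2)) (Cmul (RtoC 2) z)) by (cpx; field). rewrite E; cpx. Qed.

Lemma Shat_0 d b : Shat d b O = C1.
Proof. unfold Shat; rewrite smul_0. unfold aser, scale, Sser; simpl; cpx. Qed.

Lemma useries_0 d : useries d O = C0.
Proof. unfold useries, XX. rewrite cs_mul_coef, smul_0. simpl; cpx. Qed.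

Lemma Shat_sq cRR cLR cRL cLL ph d b : Hyps cRR cLR cRL cLL ph d b ->
  smul (Shat d b) (Shat d b) =
  sadd (smul (ssub s1 (useries d)) (ssub s1 (useries d)))
       (smul (cs (RtoC (4 * b * b))) (useries d)).
Proof.
  intros H. pose proof (hb _ _ _ _ _ _ _ H) as Hb.
  unfold Shat.
  transitivity (smul (smul (aser (Cmul d (epsC b))) (aser (Cmul d (epsC b))))
                     (smul (aser (Cmul d (Cconj (epsC b)))) (aser (Cmul d (Cconj (epsC b)))))); [ring|].
  rewrite !aser_sq. unfold useries.
  set (p := Cmul (Cmul d (epsC b)) (Cmul d (epsC b))).
  set (q := Cmul (Cmul d (Cconj (epsC b))) (Cmul d (Cconj (epsC b)))).
  assert (Hpq : Cadd p q = Cmul (Cmul d d) (RtoC (2 - 4 * b * b))).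
  { pose proof (sqrt_sq1 b ltac:(lra)) as Hs. unfold p, q, epsC. set (s := sqrt (1 - b * b)) in *.
    assert (Hs2 : s ^ 2 = 1 - b * b) by (rewrite <- Hs; ring).
    apply Cpx_eq; simpl; ring_simplify; rewrite ?Hs2; ring. }
  assert (Hpq2 : Cmul p q = Cmul (Cmul d d) (Cmul d d)).
  { unfold p, q, epsC. transitivity (Cmul (Cmul (Cmul d d) (Cmul d d))
        (Cmul (Cmul (epsC b) (Cconj (epsC b))) (Cmul (epsC b) (Cconj (epsC b))))); [unfold epsC; ring|].
    rewrite Cmul_conj, epsC_norm by lra. cpx. }
  transitivity (sadd (ssub s1 (smul (cs (Cadd p q)) XX)) (smul (cs (Cmul p q)) (smul XX XX))).
  { rewrite cs_add, cs_mul. unfold XX. ring. }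
  rewrite Hpq, Hpq2. rewrite !cs_mul, RtoC_sub, RtoC_mul, RtoC_mul, cs_sub, !cs_mul, cs_two.
  replace (RtoC 4) with (Cadd (RtoC 2) (RtoC 2)) by cpx. rewrite cs_add, cs_two. unfold XX. ring.
Qed.

Lemma Shat_sq' cRR cLR cRL cLL ph d b : Hyps cRR cLR cRL cLL ph d b ->
  smul (Shat d b) (Shat d b) =
  sadd (smul (ssub s1 (smul (cs (Cmul d d)) XX)) (ssub s1 (smul (cs (Cmul d d)) XX)))
       (smul (smul (smul (sadd s1 s1) (sadd s1 s1)) (smul (cs (RtoC b)) (cs (RtoC b)))) (smul (cs (Cmul d d)) XX)).
Proof.
  intros H. rewrite (Shat_sq _ _ _ _ _ _ _ H). unfold useries.
  rewrite !RtoC_mul, !cs_mul. replace (RtoC 4) with (Cadd (RtoC 2) (RtoC 2)) by cpx.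
  rewrite cs_add, cs_two. unfold XX. ring.
Qed.

Lemma cLL_nz cRR cLR cRL cLL ph d b : Hyps cRR cLR cRL cLL ph d b -> cLL <> C0.
Proof. intros H E. pose proof (hnLL _ _ _ _ _ _ _ H). pose proof (hb _ _ _ _ _ _ _ H).
  rewrite E in H0. unfold Cnorm2 in H0; simpl in H0. nra. Qed.

Lemma Vser_0 d b : Vser d b O = C0.
Proof. unfold Vser, ssub, sadd. rewrite useries_0, Shat_0. simpl; cpx. Qed.

Lemma rho_def cRR cLR cRL cLL ph d b : Hyps cRR cLR cRL cLL ph d b ->
  smul (smul (sadd s1 s1) (cs cLL)) (smul X (rho cLL d b)) = Vser d b.
Proof.
  intros H. pose proof (cLL_nz _ _ _ _ _ _ _ H) as Hz. unfold rho.
  transitivity (smul (smul (cs (Cmul (RtoC 2) cLL)) (cs (Cinv (Cmul (RtoC 2) cLL)))) (smul X (divX (Vser d b)))).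
  { rewrite cs_mul, cs_two. ring. }
  rewrite <- cs_mul, Cinv_r, cs_1, X_divX by (auto using Cnz_2, Vser_0). ring.
Qed.

Lemma two_cancel a : smul (sadd s1 s1) a = s0 -> a = s0.
Proof.
  intros H. apply (ser_cancel a (sadd s1 s1)). rewrite smul_comm; auto.
  unfold sadd; simpl. intros E; apply (f_equal Re) in E; simpl in E; lra.
Qed.

Lemma cs_cancel c a : c <> C0 -> smul (cs c) a = s0 -> a = s0.
Proof. intros Hc H. apply (ser_cancel a (cs c)); [rewrite smul_comm; auto|simpl; auto]. Qed.

Lemma sub_eq0 a b : ssub a b = s0 -> a = b.
Proof. intros H. apply functional_extensionality; intros n. pose proof (f_equal (fun f => f n) H) as E.
  unfold ssub, s0 in E. transitivity (Cadd (Csub (a n) (b n)) (b n)); [ring|]. rewrite E; ring. Qed.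

Lemma rho_eq cRR cLR cRL cLL ph d b : Hyps cRR cLR cRL cLL ph d b ->
  rho cLL d b = ssub (sadd (smul X (cs cRR)) (smul (smul X (cs cLL)) (smul (rho cLL d b) (rho cLL d b))))
                     (smul (smul XX (cs (Cmul d d))) (rho cLL d b)).
Proof.
  intros H. apply sub_eq0. apply X_cancel. apply two_cancel. apply two_cancel.
  apply (cs_cancel cLL); [eapply cLL_nz; eauto|].
  pose proof (rho_def _ _ _ _ _ _ _ H) as Hq.
  pose proof (Shat_sq' _ _ _ _ _ _ _ H) as HS.
  pose proof (hRRLL _ _ _ _ _ _ _ H) as HRL.
  apply (f_equal cs) in HRL. rewrite !cs_mul, cs_sub, cs_1, !cs_mul in HRL.
  set (r := rho cLL d b) in *. set (q := smul (smul (sadd s1 s1) (cs cLL)) (smul X r)) in *.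
  transitivity (sadd (ssub (smul (sadd s1 s1) q) (smul (smul (smul (sadd s1 s1) (sadd s1 s1)) (smul (cs cRR) (cs cLL))) XX))
                     (ssub (smul (smul (sadd s1 s1) (smul (cs (Cmul d d)) XX)) q) (smul q q))).
  { unfold q, XX. ring. }
  rewrite Hq, HRL. rewrite cs_mul in HS. unfold Vser, useries. rewrite cs_mul.
  set (Sh := Shat d b) in *.
  transitivity (sopp (ssub (smul Sh Sh) (sadd (smul (ssub s1 (smul (smul (cs d) (cs d)) XX)) (ssub s1 (smul (smul (cs d) (cs d)) XX)))
       (smul (smul (smul (sadd s1 s1) (sadd s1 s1)) (smul (cs (RtoC b)) (cs (RtoC b)))) (smul (smul (cs d) (cs d)) XX))))).
  { unfold XX. ring. }
  rewrite HS. ring.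
Qed.

Lemma geo_eq D : smul (geo D) (ssub s1 (smul (cs D) XX)) = s1.
Proof.
  transitivity (ssub (geo D) (smul (cs D) (smul XX (geo D)))); [unfold XX; ring|].
  apply functional_extensionality; intros [|[|n]]; unfold ssub; rewrite cs_mul_coef; unfold XX.
  - rewrite XX_coef0. simpl; cpx.
  - rewrite XX_coef1. simpl; cpx.
  - rewrite XX_coef. simpl. ring.
Qed.

Definition kk ph b := Cmul (RtoC 2) (Cadd ph (RtoC b)).

Lemma L0_rel cRR cLR cRL cLL ph d b : Hyps cRR cLR cRL cLL ph d b ->
  smul (L0 ph d b) (smul (cs (kk ph b)) (ssub s1 (useries d))) = Nser ph d b.
Proof.
  intros H. pose proof (ph_b_nz ph b (hph _ _ _ _ _ _ _ H) (hb _ _ _ _ _ _ _ H)) as Hz.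
  unfold L0, useries, kk.
  transitivity (smul (smul (cs (Cinv (Cmul (RtoC 2) (Cadd ph (RtoC b))))) (cs (Cmul (RtoC 2) (Cadd ph (RtoC b)))))
     (smul (Nser ph d b) (smul (geo (Cmul d d)) (ssub s1 (smul (cs (Cmul d d)) XX))))); [ring|].
  rewrite <- cs_mul, Cinv_l, cs_1, geo_eq by (apply Cnz_2; auto). ring.
Qed.

Definition Eexp ph d b :=
  ssub (smul (L0 ph d b) (sadd (ssub (ssub s1 (useries d)) (smul (smul (smul (sadd s1 s1) (cs ph)) (cs (RtoC b))) (useries d))) (Shat d b)))
       (sadd (ssub s1 (useries d)) (Shat d b)).

Lemma Eexp_zero cRR cLR cRL cLL ph d b : Hyps cRR cLR cRL cLL ph d b -> Eexp ph d b = s0.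
Proof.
  intros H. pose proof (ph_b_nz ph b (hph _ _ _ _ _ _ _ H) (hb _ _ _ _ _ _ _ H)) as Hz.
  apply (ser_cancel _ (smul (cs (kk ph b)) (ssub s1 (useries d)))).
  2:{ rewrite smul_0. unfold ssub; rewrite useries_0. simpl. unfold kk.
      intros E. apply Hz. apply (Cmul_eq0 _ (RtoC 2)); [rewrite <- E; cpx|].
      intros E2; apply (f_equal Re) in E2; simpl in E2; lra. }
  pose proof (L0_rel _ _ _ _ _ _ _ H) as HL.
  pose proof (Shat_sq' _ _ _ _ _ _ _ H) as HS.
  pose proof (ph_sq ph (hph _ _ _ _ _ _ _ H)) as Hph. apply (f_equal cs) in Hph. rewrite cs_mul, cs_1 in Hph.
  unfold Eexp. set (L := L0 ph d b) in *. set (Sh := Shat d b) in *. set (K := smul (cs (kk ph b)) (ssub s1 (useries d))) in *.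
  set (u := useries d) in *.
  transitivity (ssub (smul (smul L K) (sadd (ssub (ssub s1 u) (smul (smul (smul (sadd s1 s1) (cs ph)) (cs (RtoC b))) u)) Sh))
                     (smul K (sadd (ssub s1 u) Sh))); [ring|].
  rewrite HL. unfold K, kk, Nser. rewrite cs_mul, cs_two, cs_add, RtoC_mul, cs_mul, cs_two.
  change (useries d) with u. change (Shat d b) with Sh.
  assert (Hu : u = smul (cs (Cmul d d)) XX) by reflexivity.
  rewrite <- Hu in HS.
  transitivity (ssub (smul (cs ph) (ssub (smul Sh Sh) (sadd (smul (ssub s1 u) (ssub s1 u))
       (smul (smul (smul (sadd s1 s1) (sadd s1 s1)) (smul (cs (RtoC b)) (cs (RtoC b)))) u))))
     (smul (ssub (smul (cs ph) (cs ph)) s1) (smul (smul (smul (sadd s1 s1) (cs (RtoC b))) u) (sadd (ssub s1 u) Sh)))).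
  { ring. }
  rewrite HS, Hph. ring.
Qed.

Lemma Kp cRR cLR cRL cLL ph d b : Hyps cRR cLR cRL cLL ph d b ->
  Pss ph d b = sadd (smul (smul XX (cs ph)) (smul (cs cLR) (L0 ph d b)))
                     (smul (smul X (cs cLL)) (smul (Pss ph d b) (rho cLL d b))).
Proof.
  intros H. apply sub_eq0, two_cancel.
  pose proof (Eexp_zero _ _ _ _ _ _ _ H) as HE. pose proof (rho_def _ _ _ _ _ _ _ H) as Hq.
  rewrite (hLR _ _ _ _ _ _ _ H). unfold Eexp, Pss, Vser, useries in *.
  rewrite !cs_mul in *.
  set (L := L0 ph d b) in *. set (r := rho cLL d b) in *. set (Sh := Shat d b) in *.
  transitivity (ssub (ssub (smul L (sadd (ssub (ssub s1 (smul (smul (cs d) (cs d)) XX)) (smul (smul (smul (sadd s1 s1) (cs ph)) (cs (RtoC b))) (smul (smul (cs d) (cs d)) XX))) Sh))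
       (sadd (ssub s1 (smul (smul (cs d) (cs d)) XX)) Sh))
     (smul (ssub L s1) (ssub (smul (smul (sadd s1 s1) (cs cLL)) (smul X r)) (ssub (sadd s1 (smul (smul (cs d) (cs d)) XX)) Sh)))).
  { unfold XX; ring. }
  rewrite HE, Hq. ring.
Qed.

Lemma Ilem cRR cLR cRL cLL ph d b : Hyps cRR cLR cRL cLL ph d b ->
  smul (cs ph) (smul (L0 ph d b) (rho cLL d b)) =
  sadd (smul (smul X (cs cRR)) (smul (cs ph) (L0 ph d b))) (smul (cs cRL) (smul (Pss ph d b) (rho cLL d b))).
Proof.
  intros H. apply sub_eq0. apply (ser_cancel _ (ssub s1 (smul (smul X (cs cLL)) (rho cLL d b)))).
  2:{ unfold ssub. rewrite ?smul_0. simpl. intros E; apply (f_equal Re) in E; simpl in E; lra. }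
  pose proof (Kp _ _ _ _ _ _ _ H) as HK. apply (f_equal (fun s => ssub s (sadd (smul (smul XX (cs ph)) (smul (cs cLR) (L0 ph d b)))
                     (smul (smul X (cs cLL)) (smul (Pss ph d b) (rho cLL d b)))))) in HK.
  pose proof (rho_eq _ _ _ _ _ _ _ H) as Hr.
  apply (f_equal (fun s => ssub (rho cLL d b) s)) in Hr.
  assert (Hsc : ssub (ssub (smul (cs cRR) (cs cLL)) (smul (cs cRL) (cs cLR))) (cs (Cmul d d)) = s0).
  { rewrite <- !cs_mul, <- cs_sub, <- cs_sub, <- cs_0. f_equal.
    rewrite (hRRLL _ _ _ _ _ _ _ H), (hLR _ _ _ _ _ _ _ H), (hRL _ _ _ _ _ _ _ H). cpx. }
  set (L := L0 ph d b) in *. set (r := rho cLL d b) in *. set (P := Pss ph d b) in *.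
  transitivity (sadd (ssub (smul (smul (cs ph) L) (ssub r (ssub (sadd (smul X (cs cRR)) (smul (smul X (cs cLL)) (smul r r)))
                     (smul (smul XX (cs (Cmul d d))) r))))
      (smul (smul (cs cRL) r) (ssub P (sadd (smul (smul XX (cs ph)) (smul (cs cLR) L)) (smul (smul X (cs cLL)) (smul P r))))))
    (smul (smul (smul (cs ph) L) (smul XX r)) (ssub (ssub (smul (cs cRR) (cs cLL)) (smul (cs cRL) (cs cLR))) (cs (Cmul d d))))).
  { unfold XX; ring. }
  assert (Hr0 : ssub r (ssub (sadd (smul X (cs cRR)) (smul (smul X (cs cLL)) (smul r r))) (smul (smul XX (cs (Cmul d d))) r)) = s0).
  { rewrite <- Hr. ring. }
  assert (HK0 : ssub P (sadd (smul (smul XX (cs ph)) (smul (cs cLR) L)) (smul (smul X (cs cLL)) (smul P r))) = s0).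
  { rewrite HK. ring. }
  rewrite Hr0, HK0, Hsc. ring.
Qed.


Fixpoint spow (a : ser) (n : nat) : ser := match n with O => s1 | S n => smul a (spow a n) end.

Definition stateS (cLL ph d : Cpx) (b : R) (x : nat) (s : bool) : ser :=
  match x, s with
  | O, false => L0 ph d b
  | O, true => s0
  | S y, true => smul (smul X (cs ph)) (smul (L0 ph d b) (spow (rho cLL d b) y))
  | S y, false => smul (Pss ph d b) (spow (rho cLL d b) (S y))
  end.

Lemma L0_0 cRR cLR cRL cLL ph d b : Hyps cRR cLR cRL cLL ph d b -> L0 ph d b O = C1.
Proof.
  intros H. pose proof (ph_b_nz ph b (hph _ _ _ _ _ _ _ H) (hb _ _ _ _ _ _ _ H)) as Hz.
  unfold L0. rewrite cs_mul_coef, smul_0. unfold Nser, sadd. rewrite !cs_mul_coef.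
  unfold ssub. rewrite useries_0, Shat_0. simpl geo.
  replace (Cmul (Cadd (Cadd (cs (RtoC (2 * b)) 0%nat) (Cmul ph (Csub (s1 0%nat) C0))) (Cmul ph C1)) C1)
    with (Cmul (RtoC 2) (Cadd ph (RtoC b))) by (simpl; cpx).
  apply Cinv_l. apply Cnz_2; auto.
Qed.

Lemma coefX Z t : smul X Z (S t) = Z t.
Proof. apply X_mul_S. Qed.

Theorem amp_state cRR cLR cRL cLL ph d b : Hyps cRR cLR cRL cLL ph d b ->
  forall t x s, amp cRR cLR cRL cLL ph t x s = stateS cLL ph d b x s t.
Proof.
  intros H t. pose proof (L0_0 _ _ _ _ _ _ _ H) as H0.
  pose proof (Ilem _ _ _ _ _ _ _ H) as HI. pose proof (Kp _ _ _ _ _ _ _ H) as HK.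
  set (L := L0 ph d b) in *. set (r := rho cLL d b) in *. set (P := Pss ph d b) in *.
  assert (HP : P = ssub L s1) by reflexivity.
  induction t; intros x s.
  - destruct x as [|x]; destruct s; simpl amp; unfold stateS; fold L r P.
    + reflexivity.
    + symmetry; exact H0.
    + rewrite ?smul_0. simpl. ring.
    + rewrite smul_0, HP. unfold ssub. rewrite H0. simpl. ring.
  - destruct s.
    + destruct x as [|[|y]].
      * reflexivity.
      * simpl amp. rewrite IHt. unfold stateS; fold L r P.
        replace (smul (smul X (cs ph)) (smul L (spow r 0))) with (smul X (smul (cs ph) L)) by (cbn [spow]; ring).
        rewrite coefX, cs_mul_coef. reflexivity.
      * simpl amp. rewrite !IHt. unfold stateS; fold L r P.
        replace (smul (smul X (cs ph)) (smul L (spow r (S y)))) with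
          (smul X (sadd (smul (cs cRR) (smul (smul X (cs ph)) (smul L (spow r y)))) (smul (cs cRL) (smul P (spow r (S y)))))).
        { rewrite coefX. unfold sadd. rewrite !cs_mul_coef. reflexivity. }
        transitivity (smul X (smul (sadd (smul (smul X (cs cRR)) (smul (cs ph) L)) (smul (cs cRL) (smul P r))) (spow r y))).
        { cbn [spow]; ring. }
        rewrite <- HI. cbn [spow]; ring.
    + simpl amp. rewrite !IHt. destruct x as [|y].
      * unfold stateS; fold L r P.
        set (Z := sadd (smul (cs cLR) (smul (smul X (cs ph)) (smul L (spow r 0))))
                                           (smul (cs cLL) (smul P (spow r 1)))).
        assert (HL : L = sadd s1 (smul X Z)).
        { transitivity (sadd s1 P). { rewrite HP; ring. } rewrite HK at 1. unfold Z, XX; cbn [spow]; ring. }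
        transitivity (sadd s1 (smul X Z) (S t)).
        { unfold sadd at 1. rewrite coefX. unfold Z, sadd. rewrite !cs_mul_coef. simpl s1. ring. }
        rewrite <- HL. reflexivity.
      * unfold stateS; fold L r P.
        replace (smul P (spow r (S y))) with (smul X (sadd (smul (cs cLR) (smul (smul X (cs ph)) (smul L (spow r (S y)))))
                                           (smul (cs cLL) (smul P (spow r (S (S y))))))).
        { rewrite coefX. unfold sadd. rewrite !cs_mul_coef. reflexivity. }
        transitivity (smul (sadd (smul (smul XX (cs ph)) (smul (cs cLR) L)) (smul (smul X (cs cLL)) (smul P r))) (spow r (S y))).
        { unfold XX; cbn [spow]; ring. }
        rewrite <- HK. reflexivity.
Qed.


Lemma amp_parity cRR cLR cRL cLL ph : forall t x s,
  Nat.even (t + x) = false -> amp cRR cLR cRL cLL ph t x s = C0.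
Proof.
  induction t; intros x s Hp.
  - destruct x as [|x]; destruct s; simpl; auto. simpl in Hp. discriminate.
  - destruct s.
    + destruct x as [|[|y]]; simpl amp; auto.
      * rewrite IHt; [ring|]. rewrite Nat.add_0_r. rewrite Nat.add_1_r in Hp. simpl in Hp. exact Hp.
      * rewrite !IHt; [ring| |]; replace (S t + S (S y))%nat with (S (S (t + S y))) in Hp by lia; simpl in Hp; exact Hp.
    + simpl amp. rewrite !IHt; [ring| |]; replace (S t + x)%nat with (t + S x)%nat in Hp by lia; exact Hp.
Qed.

Definition ev (n : nat) : R := if Nat.even n then 1 else 0.

Lemma ev_pow n : (1 + (-1) ^ n) / 2 = ev n.
Proof.
  unfold ev. assert (H : forall n, (1 + (-1) ^ n) / 2 = (if Nat.even n then 1 else 0) /\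
     (1 + (-1) ^ (S n)) / 2 = (if Nat.even (S n) then 1 else 0)).
  { induction n0 as [|k [IH1 IH2]]. simpl; split; field.
    split; auto. simpl Nat.even. rewrite <- IH1. simpl. field. }
  apply H.
Qed.

Lemma ccv_shift f l k : ccv f l -> ccv (fun n => f (n + k)%nat) l.
Proof. intros H eps Heps. destruct (H eps Heps) as [N HN]. exists N; intros n Hn. apply HN; lia. Qed.

Lemma ccv_ev f g l N : ccv f l -> (forall n, (N <= n)%nat -> g n = f n) -> ccv g l.
Proof. intros H Hg eps Heps. destruct (H eps Heps) as [M HM]. exists (max M N); intros n Hn.
  rewrite Hg by lia. apply HM; lia. Qed.

Lemma ccv_lin a c f l : ccv f l -> ccv (fun n => Cadd a (Cmul c (f n))) (Cadd a (Cmul c l)).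
Proof.
  intros H. unfold ccv. apply cv0_le with (fun n => N1 c * N1 (Csub (f n) l)).
  - intros n; split; [apply N1_nonneg|].
    replace (Csub (Cadd a (Cmul c (f n))) (Cadd a (Cmul c l))) with (Cmul c (Csub (f n) l)) by ring.
    apply N1_mul.
  - apply cv0_scal; auto.
Qed.

Lemma Un_cv_S u : Un_cv (fun n => u (S n)) 0 -> Un_cv u 0.
Proof. intros H eps Heps. destruct (H eps Heps) as [N HN]. exists (S N); intros n Hn.
  destruct n. lia. apply HN; lia. Qed.

Lemma Cpow_conj_d d n : Cnorm2 d = 1 -> Cmul (Cpow (Cconj d) n) (Cpow d n) = C1.
Proof. intros H. rewrite <- Cpow_mul. replace (Cmul (Cconj d) d) with C1.
  - induction n; simpl; auto. rewrite IHn; ring.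
  - transitivity (Cmul d (Cconj d)); [|ring]. rewrite Cmul_conj, H. reflexivity. Qed.

Definition Mc ph d b n := Cmul (Cpow (Cconj d) n) (L0 ph d b n).
Definition Sp b := smul (aser (epsC b)) (aser (Cconj (epsC b))).
Definition Kc (ph d : Cpx) (b : R) (n : nat) := Cmul (Cinv (kk ph b))
  (Cadd (Cadd (Cmul (RtoC (2 * b)) (s1 n)) (Cmul ph (Csub (s1 n) (XX n)))) (Cmul ph (Sp b n))).
Definition ell ph b := Cmul (Cinv (kk ph b)) (Cmul (RtoC (2 * b)) (Csub C1 ph)).

Lemma Shat_scale d b : Shat d b = scale d (Sp b).
Proof. unfold Shat, Sp, aser. rewrite <- !scale_scale. apply scale_mul. Qed.

Lemma XX0 : XX O = C0. Proof. unfold XX; rewrite smul_0; simpl; ring. Qed.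
Lemma XX1 : XX 1%nat = C0. Proof. unfold XX; rewrite X_mul_S; reflexivity. Qed.
Lemma XX2 : XX 2%nat = C1. Proof. unfold XX; rewrite X_mul_S; reflexivity. Qed.
Lemma XX3 m : XX (S (S (S m))) = C0. Proof. unfold XX; rewrite X_mul_S; reflexivity. Qed.

Lemma L0_coef cRR cLR cRL cLL ph d b : Hyps cRR cLR cRL cLL ph d b -> forall n,
  Cmul (kk ph b) (Csub (L0 ph d b n) (smul (cs (Cmul d d)) (smul XX (L0 ph d b)) n)) = Nser ph d b n.
Proof.
  intros H n. rewrite <- (L0_rel _ _ _ _ _ _ _ H).
  replace (smul (L0 ph d b) (smul (cs (kk ph b)) (ssub s1 (useries d)))) with
    (smul (cs (kk ph b)) (ssub (L0 ph d b) (smul (cs (Cmul d d)) (smul XX (L0 ph d b))))) by (unfold useries, XX; ring).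
  rewrite !cs_mul_coef. unfold ssub. rewrite ?cs_mul_coef. reflexivity.
Qed.

Lemma Mc_rec cRR cLR cRL cLL ph d b : Hyps cRR cLR cRL cLL ph d b ->
  Mc ph d b 0 = Kc ph d b 0 /\ Mc ph d b 1 = Kc ph d b 1 /\
  forall m, Csub (Mc ph d b (S (S m))) (Mc ph d b m) = Kc ph d b (S (S m)).
Proof.
  intros H. pose proof (L0_coef _ _ _ _ _ _ _ H) as HC.
  pose proof (ph_b_nz ph b (hph _ _ _ _ _ _ _ H) (hb _ _ _ _ _ _ _ H)) as Hz.
  assert (Hk : kk ph b <> C0) by (unfold kk; apply Cnz_2; auto).
  pose proof (hd _ _ _ _ _ _ _ H) as Hd.
  assert (Hdd : Cmul (Cconj d) d = C1) by (transitivity (Cmul d (Cconj d)); [ring|]; rewrite Cmul_conj, Hd; reflexivity).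
  assert (HN : forall n, Nser ph d b n = Cadd (Cadd (cs (RtoC (2 * b)) n) (Cmul ph (Csub (s1 n) (Cmul (Cmul d d) (XX n)))))
                                          (Cmul ph (Cmul (Cpow d n) (Sp b n)))).
  { intros n. unfold Nser, sadd, ssub, useries. rewrite !cs_mul_coef. rewrite Shat_scale. reflexivity. }
  assert (Hsolve : forall n z, Cmul (kk ph b) z = Nser ph d b n -> z = Cmul (Cinv (kk ph b)) (Nser ph d b n)).
  { intros n z E. rewrite <- E. transitivity (Cmul (Cmul (Cinv (kk ph b)) (kk ph b)) z); [|ring]. rewrite Cinv_l; auto; ring. }
  split; [|split].
  - unfold Mc, Kc. specialize (HC O). rewrite cs_mul_coef, XX_coef0 in HC. simpl Cpow.
    apply Hsolve in HC. replace (L0 ph d b 0%nat) with (Csub (L0 ph d b 0%nat) (Cmul (Cmul d d) C0)) by ring.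
    rewrite HC, HN, XX0. simpl. ring.
  - unfold Mc, Kc. specialize (HC 1%nat). rewrite cs_mul_coef, XX_coef1 in HC.
    apply Hsolve in HC. replace (L0 ph d b 1%nat) with (Csub (L0 ph d b 1%nat) (Cmul (Cmul d d) C0)) by ring.
    rewrite HC, HN, XX1. simpl. ring_simplify.
    transitivity (Cmul (Cinv (kk ph b)) (Cmul ph (Cmul (Cmul (Cconj d) d) (Sp b 1%nat)))); [ring|]. rewrite Hdd; ring.
  - intros m. unfold Mc, Kc. specialize (HC (S (S m))). rewrite cs_mul_coef, XX_coef in HC.
    apply Hsolve in HC.
    transitivity (Cmul (Cpow (Cconj d) (S (S m))) (Csub (L0 ph d b (S (S m))) (Cmul (Cmul d d) (L0 ph d b m)))).
    { simpl Cpow. transitivity (Csub (Cmul (Cmul (Cconj d) (Cmul (Cconj d) (Cpow (Cconj d) m))) (L0 ph d b (S (S m))))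
            (Cmul (Cmul (Cmul (Cconj d) d) (Cmul (Cconj d) d)) (Cmul (Cpow (Cconj d) m) (L0 ph d b m)))); [|ring].
      rewrite Hdd. ring. }
    rewrite HC, HN. simpl s1. simpl cs.
    assert (Hc := Cpow_conj_d d (S (S m)) Hd).
    destruct m as [|m'].
    + rewrite XX2. simpl Cpow in *.
      transitivity (Cmul (Cinv (kk ph b)) (Cadd (Cmul ph (Csub C0 (Cmul (Cmul (Cconj d) d) (Cmul (Cconj d) d)))) (Cmul ph (Cmul (Cmul (Cmul (Cconj d) (Cmul (Cconj d) C1)) (Cmul d (Cmul d C1))) (Sp b 2%nat))))); [ring|].
      rewrite Hc, Hdd. ring.
    + rewrite XX3.
      transitivity (Cmul (Cinv (kk ph b)) (Cmul ph (Cmul (Cmul (Cpow (Cconj d) (S (S (S m')))) (Cpow d (S (S (S m'))))) (Sp b (S (S (S m'))))))); [ring|].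
      rewrite Hc. ring.
Qed.

Lemma Msum cRR cLR cRL cLL ph d b : Hyps cRR cLR cRL cLL ph d b -> forall n,
  Cadd (Mc ph d b (S n)) (Mc ph d b n) = csum (Kc ph d b) (S (S n)).
Proof.
  intros H. destruct (Mc_rec _ _ _ _ _ _ _ H) as [H0 [H1 H2]].
  induction n.
  - simpl. rewrite H0, H1. ring.
  - change (csum (Kc ph d b) (S (S (S n)))) with (Cadd (csum (Kc ph d b) (S (S n))) (Kc ph d b (S (S n)))).
    rewrite <- IHn, <- H2. ring.
Qed.

Lemma csum_s1 n : csum s1 (S n) = C1.
Proof. induction n. simpl; ring. change (csum s1 (S (S n))) with (Cadd (csum s1 (S n)) (s1 (S n))). rewrite IHn; simpl; ring. Qed.
Lemma csum_XX n : csum XX (S (S (S n))) = C1.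
Proof. induction n. simpl. rewrite XX0, XX1, XX2. ring.
  change (csum XX (S (S (S (S n))))) with (Cadd (csum XX (S (S (S n)))) (XX (S (S (S n))))). rewrite IHn, XX3; ring. Qed.

Lemma Kc_sum ph d b n : csum (Kc ph d b) (S (S (S n))) =
  Cadd (Cmul (Cinv (kk ph b)) (RtoC (2 * b))) (Cmul (Cmul (Cinv (kk ph b)) ph) (csum (Sp b) (S (S (S n))))).
Proof.
  unfold Kc. rewrite csum_scal_l, !csum_add, !csum_scal_l, csum_sub, csum_s1, csum_XX. ring.
Qed.

Lemma Msum_cv cRR cLR cRL cLL ph d b : Hyps cRR cLR cRL cLL ph d b ->
  ccv (fun n => Cadd (Mc ph d b (S n)) (Mc ph d b n)) (ell ph b).
Proof.
  intros H. pose proof (hb _ _ _ _ _ _ _ H) as Hb.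
  pose proof (Lim_sum b Hb) as HL. fold (Sp b) in HL.
  apply (ccv_shift _ _ 2%nat) in HL.
  apply (ccv_lin (Cmul (Cinv (kk ph b)) (RtoC (2 * b))) (Cmul (Cinv (kk ph b)) ph)) in HL.
  replace (ell ph b) with (Cadd (Cmul (Cinv (kk ph b)) (RtoC (2 * b))) (Cmul (Cmul (Cinv (kk ph b)) ph) (RtoC (-2 * b)))).
  2:{ unfold ell. cpx. }
  eapply ccv_ev with (N := 1%nat); [exact HL|].
  intros n Hn. destruct n as [|n]; [lia|]. rewrite (Msum _ _ _ _ _ _ _ H), Kc_sum.
  cbv beta. replace (S n + 2)%nat with (S (S (S n))) by lia. reflexivity.
Qed.

Lemma N1_unit_pow d n : Cnorm2 d = 1 -> N1 (Cpow d n) <= 2.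
Proof. intros H. assert (Hp : Cnorm2 (Cpow d n) = 1) by (rewrite Cnorm2_pow, H; apply pow1).
  pose proof (Re_le1 _ Hp). pose proof (Im_le1 _ Hp). unfold N1; lra. Qed.

Theorem D0_cv cRR cLR cRL cLL ph d b : Hyps cRR cLR cRL cLL ph d b ->
  ccv (fun t => Csub (amp cRR cLR cRL cLL ph t 0 false) (Cmul (ell ph b) (Cmul (Cpow d t) (RtoC (ev t))))) C0.
Proof.
  intros H. pose proof (hd _ _ _ _ _ _ _ H) as Hd.
  assert (HA : forall t, amp cRR cLR cRL cLL ph t 0 false = Cmul (Cpow d t) (Mc ph d b t)).
  { intros t. rewrite (amp_state _ _ _ _ _ _ _ H). unfold Mc. simpl stateS.
    transitivity (Cmul (Cmul (Cpow (Cconj d) t) (Cpow d t)) (L0 ph d b t)). rewrite Cpow_conj_d; auto; ring. ring. }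
  assert (HM0 : forall t, Nat.even t = false -> Mc ph d b t = C0).
  { intros t Ht. unfold Mc. replace (L0 ph d b t) with (amp cRR cLR cRL cLL ph t 0 false).
    rewrite amp_parity. ring. rewrite Nat.add_0_r; auto. rewrite (amp_state _ _ _ _ _ _ _ H). reflexivity. }
  pose proof (Msum_cv _ _ _ _ _ _ _ H) as HS.
  unfold ccv. apply Un_cv_S.
  apply cv0_le with (fun n => 2 * N1 (Csub (Cadd (Mc ph d b (S n)) (Mc ph d b n)) (ell ph b))).
  2:{ apply cv0_scal. exact HS. }
  intros n. split; [apply N1_nonneg|].
  rewrite HA.
  replace (Csub (Csub (Cmul (Cpow d (S n)) (Mc ph d b (S n))) (Cmul (ell ph b) (Cmul (Cpow d (S n)) (RtoC (ev (S n)))))) C0)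
    with (Cmul (Cpow d (S n)) (Csub (Mc ph d b (S n)) (Cmul (ell ph b) (RtoC (ev (S n)))))) by ring.
  eapply Rle_trans; [apply N1_mul|].
  assert (N1 (Csub (Mc ph d b (S n)) (Cmul (ell ph b) (RtoC (ev (S n))))) <=
          N1 (Csub (Cadd (Mc ph d b (S n)) (Mc ph d b n)) (ell ph b))).
  { unfold ev. destruct (Nat.even (S n)) eqn:E.
    - rewrite (HM0 n). replace (Cadd (Mc ph d b (S n)) C0) with (Mc ph d b (S n)) by ring.
      replace (Cmul (ell ph b) (RtoC 1)) with (ell ph b) by cpx. lra.
      rewrite Nat.even_succ in E. rewrite <- Nat.negb_odd. rewrite E. reflexivity.
    - rewrite (HM0 (S n) E). replace (Csub C0 (Cmul (ell ph b) (RtoC 0))) with C0 by cpx.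
      rewrite N1_C0. apply N1_nonneg. }
  pose proof (N1_unit_pow d (S n) Hd). pose proof (N1_nonneg (Csub (Mc ph d b (S n)) (Cmul (ell ph b) (RtoC (ev (S n)))))).
  nra.
Qed.


Definition Acoef ph b cRR := Cmul (Cadd ph (RtoC b)) (Cinv cRR).
Definition rcoef ph b cRR d := Cmul ph (Cinv (Cmul d (Acoef ph b cRR))).
Definition hL ph b cRR d t x :=
  Cmul (ell ph b) (Cmul (Cpow d t) (Cmul (Cpow (rcoef ph b cRR d) x) (RtoC (ev (t + x))))).
Definition hh ph b cRR d t x (s : bool) :=
  if s then match x with O => C0 | _ => Cmul (Acoef ph b cRR) (hL ph b cRR d t x) end
  else hL ph b cRR d t x.

Lemma Cnz_norm z : 0 < Cnorm2 z -> z <> C0.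
Proof. intros H E; subst; unfold Cnorm2 in H; simpl in H; lra. Qed.

Lemma Cmul_nz z w : z <> C0 -> w <> C0 -> Cmul z w <> C0.
Proof. intros Hz Hw E. apply Hz. eapply Cmul_eq0; eauto. Qed.

Lemma Cinv_nz z : z <> C0 -> Cinv z <> C0.
Proof. intros Hz E. assert (Cmul (Cinv z) z = C1) by (apply Cinv_l; auto). rewrite E in H.
  apply (f_equal Re) in H; simpl in H; lra. Qed.

Lemma ev_SS n : ev (S (S n)) = ev n.
Proof. reflexivity. Qed.

Lemma hcoef_facts cRR cLR cRL cLL ph d b : Hyps cRR cLR cRL cLL ph d b ->
  Cmul d (Cmul (rcoef ph b cRR d) (Acoef ph b cRR)) = ph /\
  Cadd (Cmul cRR (Acoef ph b cRR)) cRL = ph /\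
  Cmul (rcoef ph b cRR d) (Cadd (Cmul cLR (Acoef ph b cRR)) cLL) = d.
Proof.
  intros H. pose proof (hb _ _ _ _ _ _ _ H) as Hb.
  assert (HRR : cRR <> C0) by (apply Cnz_norm; rewrite (hnRR _ _ _ _ _ _ _ H); nra).
  assert (Hdz : d <> C0) by (apply Cnz_norm; rewrite (hd _ _ _ _ _ _ _ H); lra).
  pose proof (ph_b_nz ph b (hph _ _ _ _ _ _ _ H) Hb) as Hpb.
  assert (HA : Acoef ph b cRR <> C0) by (apply Cmul_nz; auto using Cinv_nz).
  assert (HdA : Cmul d (Acoef ph b cRR) <> C0) by (apply Cmul_nz; auto).
  assert (HAc : Cmul cRR (Acoef ph b cRR) = Cadd ph (RtoC b)).
  { unfold Acoef. transitivity (Cmul (Cadd ph (RtoC b)) (Cmul cRR (Cinv cRR))); [ring|]. rewrite Cinv_r; auto; ring. }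
  split; [|split].
  - unfold rcoef. transitivity (Cmul ph (Cmul (Cmul d (Acoef ph b cRR)) (Cinv (Cmul d (Acoef ph b cRR))))); [ring|].
    rewrite Cinv_r; auto; ring.
  - rewrite HAc, (hRL _ _ _ _ _ _ _ H). cpx.
  - assert (Key : Cmul ph (Cadd (Cmul cLR (Acoef ph b cRR)) cLL) = Cmul d (Cmul d (Acoef ph b cRR))).
    { apply (Cmul_eq0 _ cRR) in HRR as Hc || idtac.
      assert (E : Cmul (Csub (Cmul ph (Cadd (Cmul cLR (Acoef ph b cRR)) cLL)) (Cmul d (Cmul d (Acoef ph b cRR)))) cRR = C0).
      { transitivity (Csub (Cmul ph (Cadd (Cmul cLR (Cmul cRR (Acoef ph b cRR))) (Cmul cRR cLL))) (Cmul (Cmul d d) (Cmul cRR (Acoef ph b cRR)))); [ring|].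
        rewrite HAc, (hRRLL _ _ _ _ _ _ _ H), (hLR _ _ _ _ _ _ _ H).
        pose proof (ph_sq ph (hph _ _ _ _ _ _ _ H)) as Hp.
        transitivity (Cmul (Cmul d d) (Cmul (RtoC b) (Csub (Cmul ph ph) C1))); [ring|]. rewrite Hp; ring. }
      apply Cmul_eq0 in E; auto.
      transitivity (Cadd (Csub (Cmul ph (Cadd (Cmul cLR (Acoef ph b cRR)) cLL)) (Cmul d (Cmul d (Acoef ph b cRR)))) (Cmul d (Cmul d (Acoef ph b cRR)))); [ring|].
      rewrite E; ring. }
    unfold rcoef. transitivity (Cmul (Cinv (Cmul d (Acoef ph b cRR))) (Cmul ph (Cadd (Cmul cLR (Acoef ph b cRR)) cLL))); [ring|].
    rewrite Key. transitivity (Cmul (Cmul (Cinv (Cmul d (Acoef ph b cRR))) (Cmul d (Acoef ph b cRR))) d); [ring|].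
    rewrite Cinv_l; auto; ring.
Qed.

Lemma ccv_S f l : ccv (fun t => f (S t)) l -> ccv f l.
Proof. intros H eps Heps. destruct (H eps Heps) as [N HN]. exists (S N); intros n Hn.
  destruct n. lia. apply HN; lia. Qed.

Lemma ccv_comb0 c e f g : ccv f C0 -> ccv g C0 -> ccv (fun t => Cadd (Cmul c (f t)) (Cmul e (g t))) C0.
Proof.
  intros Hf Hg. unfold ccv in *.
  apply cv0_le with (fun t => N1 c * N1 (Csub (f t) C0) + N1 e * N1 (Csub (g t) C0)).
  - intros t; split; [apply N1_nonneg|].
    replace (Csub (Cadd (Cmul c (f t)) (Cmul e (g t))) C0) with (Cadd (Cmul c (Csub (f t) C0)) (Cmul e (Csub (g t) C0))) by ring.
    eapply Rle_trans; [apply N1_add|]. pose proof (N1_mul c (Csub (f t) C0)). pose proof (N1_mul e (Csub (g t) C0)). lra.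
  - apply cv0_plus; apply cv0_scal; auto.
Qed.

Theorem transfer cRR cLR cRL cLL ph d b : Hyps cRR cLR cRL cLL ph d b -> forall x s,
  ccv (fun t => Csub (amp cRR cLR cRL cLL ph t x s) (hh ph b cRR d t x s)) C0.
Proof.
  intros H. destruct (hcoef_facts _ _ _ _ _ _ _ H) as [F1 [F2 F3]].
  set (A := Acoef ph b cRR) in *. set (r := rcoef ph b cRR d) in *.
  assert (HLL : cLL <> C0) by (eapply cLL_nz; eauto).
  set (Dd := fun t x s => Csub (amp cRR cLR cRL cLL ph t x s) (hh ph b cRR d t x s)).
  assert (W3 : forall t x, Dd (S t) x false = Cadd (Cmul cLR (Dd t (S x) true)) (Cmul cLL (Dd t (S x) false))).
  { intros t x. unfold Dd. simpl amp. unfold hh, hL. fold A r.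
    replace (ev (S t + x)) with (ev (t + S x)) by (f_equal; lia).
    transitivity (Csub (Cadd (Cmul cLR (amp cRR cLR cRL cLL ph t (S x) true)) (Cmul cLL (amp cRR cLR cRL cLL ph t (S x) false)))
       (Cmul (ell ph b) (Cmul (Cpow d t) (Cmul (Cmul (Cmul r (Cadd (Cmul cLR A) cLL)) (Cpow r x)) (RtoC (ev (t + S x))))))).
    { rewrite F3. simpl Cpow. ring. }
    simpl Cpow. ring. }
  assert (W1 : forall t, Dd (S t) 1%nat true = Cmul ph (Dd t 0%nat false)).
  { intros t. unfold Dd. simpl amp. unfold hh, hL. fold A r.
    replace (ev (S t + 1)%nat) with (ev (t + 0)) by (replace (S t + 1)%nat with (S (S (t + 0))) by lia; reflexivity).
    transitivity (Csub (Cmul ph (amp cRR cLR cRL cLL ph t 0 false))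
       (Cmul (ell ph b) (Cmul (Cpow d t) (Cmul (Cmul (Cmul d (Cmul r A)) C1) (RtoC (ev (t + 0))))))).
    { simpl Cpow. ring. }
    rewrite F1. simpl Cpow. ring. }
  assert (W2 : forall t y, Dd (S t) (S (S y)) true = Cadd (Cmul cRR (Dd t (S y) true)) (Cmul cRL (Dd t (S y) false))).
  { intros t y. unfold Dd. simpl amp. unfold hh, hL. fold A r.
    replace (ev (S t + S (S y))) with (ev (t + S y)) by (replace (S t + S (S y))%nat with (S (S (t + S y))) by lia; reflexivity).
    transitivity (Csub (Cadd (Cmul cRR (amp cRR cLR cRL cLL ph t (S y) true)) (Cmul cRL (amp cRR cLR cRL cLL ph t (S y) false)))
       (Cmul (ell ph b) (Cmul (Cpow d t) (Cmul (Cmul (Cmul d (Cmul r A)) (Cpow r (S y))) (RtoC (ev (t + S y))))))).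
    { simpl Cpow. ring. }
    rewrite F1, <- F2. simpl Cpow. ring. }
  assert (Main : forall x, ccv (fun t => Dd t x true) C0 /\ ccv (fun t => Dd t x false) C0).
  { induction x as [|x [IHt IHf]].
    - split.
      + apply ccv_eventually with O. intros n _. unfold Dd, hh. destruct n; simpl; cpx.
      + pose proof (D0_cv _ _ _ _ _ _ _ H) as HD. eapply ccv_ext; [|exact HD].
        intros t. unfold Dd, hh, hL. simpl Cpow. rewrite Nat.add_0_r. f_equal. f_equal. f_equal. cpx.
    - assert (HT : ccv (fun t => Dd t (S x) true) C0).
      { apply ccv_S. destruct x as [|y].
        - eapply ccv_ext; [|apply (ccv_comb0 ph C0 _ _ IHf IHf)]. intros t; simpl. rewrite W1. ring.
        - eapply ccv_ext; [|apply (ccv_comb0 cRR cRL _ _ IHt IHf)]. intros t; simpl. rewrite W2. reflexivity. }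
      split; auto.
      assert (HS : ccv (fun t => Dd (S t) x false) C0).
      { intros eps Heps. destruct (IHf eps Heps) as [N HN]. exists N; intros n Hn. apply HN; lia. }
      eapply ccv_ext; [|apply (ccv_comb0 (Cinv cLL) (Copp (Cmul (Cinv cLL) cLR)) _ _ HS HT)].
      intros t. simpl. rewrite W3.
      transitivity (Cadd (Cmul (Cmul (Cinv cLL) cLL) (Dd t (S x) false)) C0); [ring|]. rewrite Cinv_l; auto. ring. }
  intros x s. destruct (Main x). destruct s; assumption.
Qed.


Lemma Csqrt_unit z : Cnorm2 z = 1 -> exists d, Cmul d d = z /\ Cnorm2 d = 1.
Proof.
  destruct z as [a c]. unfold Cnorm2; simpl. intros H.
  assert (Ha : -1 <= a <= 1) by nra.
  set (p := sqrt ((1 + a) / 2)). set (q := sqrt ((1 - a) / 2)).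
  assert (Hp : p * p = (1 + a) / 2) by (apply sqrt_sqrt; lra).
  assert (Hq : q * q = (1 - a) / 2) by (apply sqrt_sqrt; lra).
  assert (Hp0 : 0 <= p) by apply sqrt_pos. assert (Hq0 : 0 <= q) by apply sqrt_pos.
  assert (Hpq : (2 * p * q) * (2 * p * q) = c * c) by nra.
  assert (Hpq0 : 0 <= 2 * p * q) by nra.
  destruct (Rle_dec 0 c) as [Hc|Hc].
  - exists (mkC p q). split; [|unfold Cnorm2; simpl; lra].
    apply Cpx_eq; simpl; [lra|]. nra.
  - exists (mkC p (- q)). split; [|unfold Cnorm2; simpl; lra].
    apply Cpx_eq; simpl; [lra|]. nra.
Qed.

Lemma Cexpi_0 : Cexpi 0 = RtoC 1.
Proof. unfold Cexpi, RtoC. rewrite cos_0, sin_0. reflexivity. Qed.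
Lemma Cexpi_PI : Cexpi PI = RtoC (-1).
Proof. unfold Cexpi, RtoC. rewrite cos_PI, sin_PI. reflexivity. Qed.

Lemma get_hyps (kappa : nat) (cRR cLR cRL cLL ph : Cpx) :
  (3 <= kappa)%nat -> unitary2 cRR cLR cRL cLL ->
  Cmul (Cconj cLR) (det2 cRR cLR cRL cLL) = RtoC (2 / INR kappa - 1) ->
  (ph = RtoC 1 \/ ph = RtoC (-1)) ->
  exists d, Hyps cRR cLR cRL cLL ph d (2 / INR kappa - 1).
Proof.
  intros Hk [E1 [E2 [E3 E4]]] Hc Hph.
  set (b := 2 / INR kappa - 1) in *.
  assert (HK : 3 <= INR kappa) by (replace 3 with (INR 3) by (simpl; ring); apply le_INR; auto).
  assert (Hb : -1 < b < 0).
  { unfold b. split.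
    - assert (0 < 2 / INR kappa) by (apply Rdiv_lt_0_compat; lra). lra.
    - assert (2 / INR kappa < 1). { apply Rmult_lt_reg_r with (INR kappa); [lra|]. field_simplify; lra. } lra. }
  set (Dl := det2 cRR cLR cRL cLL) in *.
  assert (HD : Cmul Dl (Cconj Dl) = C1).
  { transitivity (Csub (Cmul (Cadd (Cmul cRR (Cconj cRR)) (Cmul cLR (Cconj cLR))) (Cadd (Cmul cRL (Cconj cRL)) (Cmul cLL (Cconj cLL))))
                       (Cmul (Cadd (Cmul cRR (Cconj cRL)) (Cmul cLR (Cconj cLL))) (Cadd (Cmul cRL (Cconj cRR)) (Cmul cLL (Cconj cLR))))).
    { unfold Dl, det2. rewrite Cconj_sub, !Cconj_mul. ring. }
    rewrite E1, E2, E3, E4. ring. }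
  assert (HDn : Cnorm2 Dl = 1) by (rewrite Cmul_conj in HD; apply (f_equal Re) in HD; simpl in HD; auto).
  destruct (Csqrt_unit Dl HDn) as [d [Hdd Hdn]]. exists d.
  assert (HRL : cRL = RtoC (- b)).
  { assert (Cadd (Cmul Dl (Cconj cLR)) cRL = C0).
    { transitivity (Csub (Cmul cRR (Cadd (Cmul cRL (Cconj cRR)) (Cmul cLL (Cconj cLR)))) (Cmul cRL (Csub (Cadd (Cmul cRR (Cconj cRR)) (Cmul cLR (Cconj cLR))) C1))).
      { unfold Dl, det2; ring. }
      rewrite E3, E1. ring. }
    transitivity (Csub (Cadd (Cmul Dl (Cconj cLR)) cRL) (Cmul (Cconj cLR) Dl)); [ring|].
    rewrite H, Hc. cpx. }
  assert (HLR : cLR = Cmul (RtoC b) Dl).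
  { assert (Hc' : Cconj cLR = Cmul (RtoC b) (Cconj Dl)).
    { transitivity (Cmul (Cmul (Cconj cLR) Dl) (Cconj Dl)); [|rewrite Hc; ring].
      transitivity (Cmul (Cconj cLR) (Cmul Dl (Cconj Dl))); [|ring]. rewrite HD; ring. }
    apply (f_equal Cconj) in Hc'. rewrite Cconj_conj, Cconj_mul, Cconj_RtoC, Cconj_conj in Hc'. exact Hc'. }
  constructor; auto.
  - rewrite Hdd; auto.
  - rewrite Hdd. transitivity (Cadd Dl (Cmul cLR cRL)); [unfold Dl, det2; ring|]. rewrite HLR, HRL. cpx.
  - assert (HnLR : Cnorm2 cLR = b * b) by (rewrite HLR, Cnorm2_mul, Cnorm2_RtoC, HDn; ring).
    apply (f_equal Re) in E1. simpl in E1. unfold Cnorm2 in *. lra.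
  - assert (HnRL : Cnorm2 cRL = b * b) by (rewrite HRL, Cnorm2_RtoC; ring).
    apply (f_equal Re) in E4. simpl in E4. unfold Cnorm2 in *. lra.
Qed.


Lemma cv0_abs (u v : nat -> R) : (forall n, Rabs (u n) <= v n) -> Un_cv v 0 -> Un_cv u 0.
Proof.
  intros H Hv eps Heps. destruct (Hv eps Heps) as [N HN]; exists N; intros n Hn.
  specialize (HN n Hn); specialize (H n). unfold R_dist in *. rewrite Rminus_0_r in *.
  pose proof (Rabs_pos (u n)). rewrite Rabs_pos_eq in HN by lra. lra.
Qed.

Lemma N1_sub0 z : N1 (Csub z C0) = N1 z.
Proof. unfold N1; simpl; rewrite !Rminus_0_r; reflexivity. Qed.

Lemma sq_conv (h D : nat -> Cpx) B : (forall t, N1 (h t) <= B) -> ccv D C0 ->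
  Un_cv (fun t => Cnorm2 (Cadd (h t) (D t)) - Cnorm2 (h t)) 0.
Proof.
  intros Hh HD.
  apply cv0_abs with (fun t => 2 * B * N1 (Csub (D t) C0) + N1 (Csub (D t) C0) * N1 (Csub (D t) C0)).
  - intros t. rewrite N1_sub0. specialize (Hh t). unfold Cnorm2, N1 in *. simpl.
    set (a := Re (h t)) in *. set (b := Im (h t)) in *. set (c := Re (D t)). set (e := Im (D t)).
    replace ((a + c) * (a + c) + (b + e) * (b + e) - (a * a + b * b)) with ((2 * a * c + 2 * b * e) + (c * c + e * e)) by ring.
    eapply Rle_trans; [apply Rabs_triang|].
    assert (H1 : Rabs (2 * a * c + 2 * b * e) <= 2 * (Rabs a * Rabs c + Rabs b * Rabs e)).
    { eapply Rle_trans; [apply Rabs_triang|]. rewrite !Rabs_mult. rewrite (Rabs_pos_eq 2) by lra. lra. }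
    assert (H2 : Rabs (c * c + e * e) = c * c + e * e) by (apply Rabs_pos_eq; nra).
    rewrite H2.
    assert (Hc2 : c * c = Rabs c * Rabs c) by (rewrite <- Rabs_mult; rewrite Rabs_pos_eq; nra).
    assert (He2 : e * e = Rabs e * Rabs e) by (rewrite <- Rabs_mult; rewrite Rabs_pos_eq; nra).
    pose proof (Rabs_pos a); pose proof (Rabs_pos b); pose proof (Rabs_pos c); pose proof (Rabs_pos e).
    nra.
  - apply cv0_plus. apply cv0_scal; exact HD.
    replace 0 with (0 * 0) by ring. apply CV_mult; exact HD.
Qed.

Definition PA cRR cLR cRL cLL ph t x :=
  match x with
  | O => Cnorm2 (amp cRR cLR cRL cLL ph t O false)
  | _ => Cnorm2 (amp cRR cLR cRL cLL ph t x true) + Cnorm2 (amp cRR cLR cRL cLL ph t x false)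
  end.
Definition PH ph b cRR d t x :=
  match x with
  | O => Cnorm2 (hh ph b cRR d t O false)
  | _ => Cnorm2 (hh ph b cRR d t x true) + Cnorm2 (hh ph b cRR d t x false)
  end.

Lemma hh_bound cRR cLR cRL cLL ph d b : Hyps cRR cLR cRL cLL ph d b -> forall x s t,
  N1 (hh ph b cRR d t x s) <= (1 + N1 (Acoef ph b cRR)) * (N1 (ell ph b) * (2 * N1 (Cpow (rcoef ph b cRR d) x))).
Proof.
  intros H x s t. pose proof (hd _ _ _ _ _ _ _ H) as Hd.
  assert (HL : N1 (hL ph b cRR d t x) <= N1 (ell ph b) * (2 * N1 (Cpow (rcoef ph b cRR d) x))).
  { unfold hL. eapply Rle_trans; [apply N1_mul|]. apply Rmult_le_compat_l; [apply N1_nonneg|].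
    eapply Rle_trans; [apply N1_mul|]. apply Rmult_le_compat; auto using N1_nonneg, N1_unit_pow.
    eapply Rle_trans; [apply N1_mul|].
    assert (N1 (RtoC (ev (t + x))) <= 1) by (unfold N1, ev; simpl; destruct (Nat.even (t + x)); rewrite ?Rabs_R1, ?Rabs_R0; lra).
    pose proof (N1_nonneg (Cpow (rcoef ph b cRR d) x)). pose proof (N1_nonneg (RtoC (ev (t + x)))). nra. }
  pose proof (N1_nonneg (Acoef ph b cRR)). pose proof (N1_nonneg (hL ph b cRR d t x)).
  unfold hh. destruct s; [destruct x|].
  - rewrite N1_C0. apply Rmult_le_pos; [lra|]. eapply Rle_trans; [apply N1_nonneg|exact HL].
  - eapply Rle_trans; [apply N1_mul|]. nra.
  - nra.
Qed.

Theorem PA_PH cRR cLR cRL cLL ph d b : Hyps cRR cLR cRL cLL ph d b -> forall x,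
  Un_cv (fun t => PA cRR cLR cRL cLL ph t x - PH ph b cRR d t x) 0.
Proof.
  intros H x. pose proof (transfer _ _ _ _ _ _ _ H) as HT. pose proof (hh_bound _ _ _ _ _ _ _ H) as HB.
  assert (Hgen : forall s, Un_cv (fun t => Cnorm2 (amp cRR cLR cRL cLL ph t x s) - Cnorm2 (hh ph b cRR d t x s)) 0).
  { intros s. eapply Un_cv_ext; [|apply (sq_conv (fun t => hh ph b cRR d t x s) _ _ (fun t => HB x s t) (HT x s))].
    intros t; simpl. f_equal. f_equal. ring. }
  destruct x as [|y].
  - exact (Hgen false).
  - eapply Un_cv_ext; [|apply (cv0_plus _ _ (Hgen true) (Hgen false))]. intros t; simpl. ring.
Qed.


Lemma Cnorm2_inv z : z <> C0 -> Cnorm2 (Cinv z) = / Cnorm2 z.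
Proof. intros H. pose proof (Cnorm2_pos z H). unfold Cinv, Cnorm2 in *; simpl. field. lra. Qed.

Lemma ev_sq n : ev n * ev n = ev n.
Proof. unfold ev; destruct (Nat.even n); ring. Qed.

Lemma hL_norm cRR cLR cRL cLL ph d b : Hyps cRR cLR cRL cLL ph d b -> forall t x,
  Cnorm2 (hL ph b cRR d t x) = Cnorm2 (ell ph b) * Cnorm2 (rcoef ph b cRR d) ^ x * ev (t + x).
Proof.
  intros H t x. unfold hL. rewrite !Cnorm2_mul, !Cnorm2_pow, (hd _ _ _ _ _ _ _ H), pow1, Cnorm2_RtoC, ev_sq. ring.
Qed.

Lemma PH_formula cRR cLR cRL cLL ph d b : Hyps cRR cLR cRL cLL ph d b -> forall t x,
  PH ph b cRR d t x = match x with
    | O => Cnorm2 (ell ph b) * ev t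
    | _ => (Cnorm2 (Acoef ph b cRR) + 1) * Cnorm2 (ell ph b) * Cnorm2 (rcoef ph b cRR d) ^ x * ev (t + x) end.
Proof.
  intros H t [|y]; unfold PH, hh.
  - rewrite (hL_norm _ _ _ _ _ _ _ H). simpl. rewrite Nat.add_0_r. ring.
  - rewrite Cnorm2_mul, !(hL_norm _ _ _ _ _ _ _ H). ring.
Qed.

Lemma caseA_PH cRR cLR cRL cLL d b kappa : Hyps cRR cLR cRL cLL (RtoC 1) d b -> forall t x,
  PH (RtoC 1) b cRR d t x = limit_profile kappa 0 t x.
Proof.
  intros H t x. rewrite (PH_formula _ _ _ _ _ _ _ H).
  assert (E : Cnorm2 (ell (RtoC 1) b) = 0).
  { unfold ell. replace (Csub C1 (RtoC 1)) with C0 by cpx. rewrite !Cnorm2_mul. unfold Cnorm2 at 3; simpl. ring. }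
  rewrite E. unfold limit_profile. destruct x; ring.
Qed.

Lemma caseB_PH cRR cLR cRL cLL d kappa : (3 <= kappa)%nat ->
  Hyps cRR cLR cRL cLL (RtoC (-1)) d (2 / INR kappa - 1) -> forall t x,
  PH (RtoC (-1)) (2 / INR kappa - 1) cRR d t x = limit_profile kappa (C_caseB kappa) t x.
Proof.
  intros Hk H t x. rewrite (PH_formula _ _ _ _ _ _ _ H).
  set (b := 2 / INR kappa - 1) in *. pose proof (hb _ _ _ _ _ _ _ H) as Hb.
  assert (HK : 3 <= INR kappa) by (replace 3 with (INR 3) by (simpl; ring); apply le_INR; auto).
  assert (Hbk : b = 2 / INR kappa - 1) by reflexivity.
  assert (HRR : cRR <> C0) by (apply Cnz_norm; rewrite (hnRR _ _ _ _ _ _ _ H); nra).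
  assert (Hdz : d <> C0) by (apply Cnz_norm; rewrite (hd _ _ _ _ _ _ _ H); lra).
  pose proof (ph_b_nz (RtoC (-1)) b (or_intror eq_refl) Hb) as Hpb.
  assert (HA0 : Acoef (RtoC (-1)) b cRR <> C0) by (apply Cmul_nz; auto using Cinv_nz).
  assert (HA : Cnorm2 (Acoef (RtoC (-1)) b cRR) = INR kappa - 1).
  { unfold Acoef. rewrite Cnorm2_mul, Cnorm2_inv, (hnRR _ _ _ _ _ _ _ H) by auto.
    unfold Cnorm2; simpl. rewrite Hbk. field. split; [lra|].
    intros E. assert (0 < 2 / INR kappa) by (apply Rdiv_lt_0_compat; lra).
    assert (2 / INR kappa < 1). { apply Rmult_lt_reg_r with (INR kappa); [lra|]. field_simplify; lra. } nra. }
  assert (Hr : Cnorm2 (rcoef (RtoC (-1)) b cRR d) = 1 / (INR kappa - 1)).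
  { unfold rcoef. rewrite Cnorm2_mul, Cnorm2_inv by (apply Cmul_nz; auto).
    rewrite Cnorm2_mul, (hd _ _ _ _ _ _ _ H), HA. unfold Cnorm2; simpl. field. lra. }
  assert (Hell : Cnorm2 (ell (RtoC (-1)) b) = C_caseB kappa).
  { unfold ell, kk, C_caseB. rewrite !Cnorm2_mul, Cnorm2_inv by (apply Cnz_2; auto).
    rewrite Cnorm2_mul. unfold Cnorm2; simpl. rewrite Hbk. field. lra. }
  rewrite Hell. unfold limit_profile. rewrite ev_pow. destruct x as [|y].
  - rewrite Nat.add_0_r. ring.
  - rewrite HA, Hr. ring_simplify. replace (INR kappa - 1 + 1) with (INR kappa) by ring. ring.
Qed.

Theorem corollary3 (kappa : nat) (cRR cLR cRL cLL : Cpx) (gamma : R) :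
  (3 <= kappa)%nat ->
  unitary2 cRR cLR cRL cLL ->
  Cmul (Cconj cLR) (det2 cRR cLR cRL cLL) = RtoC (2 / INR kappa - 1) ->
  forall x : nat,
    (gamma = 0 ->
       Un_cv (fun t => probY cRR cLR cRL cLL gamma t x
                        - limit_profile kappa 0 t x) 0) /\
    (gamma = PI ->
       Un_cv (fun t => probY cRR cLR cRL cLL gamma t x
                        - limit_profile kappa (C_caseB kappa) t x) 0).
Proof.
  intros Hk HU Hc x. split; intros ->.
  - destruct (get_hyps kappa cRR cLR cRL cLL (RtoC 1) Hk HU Hc (or_introl eq_refl)) as [d H].
    eapply Un_cv_ext; [|apply (PA_PH _ _ _ _ _ _ _ H x)].
    intros t. rewrite <- (caseA_PH _ _ _ _ _ _ kappa H t x). unfold probY, PA. rewrite Cexpi_0. reflexivity.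
  - destruct (get_hyps kappa cRR cLR cRL cLL (RtoC (-1)) Hk HU Hc (or_intror eq_refl)) as [d H].
    eapply Un_cv_ext; [|apply (PA_PH _ _ _ _ _ _ _ H x)].
    intros t. rewrite <- (caseB_PH _ _ _ _ _ _ Hk H t x). unfold probY, PA. rewrite Cexpi_PI. reflexivity.
Qed.
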